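(* Let $T>0$, $L_x,L_y>0$, and let $R,P,Q$ be real-valued $C^2$ functions on the wedge $W_T=\{(u,x,y,z): u\ge 0,\ z\ge 0,\ u+z\le T\}$, periodic in $x$ with period $L_x$ and in $y$ with period $L_y$, satisfying $$2R_u = P_x+Q_y+R_z,\qquad P_z=R_x,\qquad Q_z=R_y .$$ Then $$\int_{\Sigma_T}\big(R_x^2+R_y^2+R_z^2+P_x^2+Q_x^2+P_y^2+Q_y^2\big)\,d\Sigma_T \le 2\left(\int_{\Sigma_u}\big(R_x^2+R_y^2+R_z^2\big)\,d\Sigma_u+\int_{\Sigma_z}\big(P_x^2+Q_x^2+P_y^2+Q_y^2\big)\,d\Sigma_z\right).$$
   Context: Coordinates $(u,x,y,z)$ with $u=t-z$, where $(t,x,y,z)$ are Cartesian Minkowski coordinates; subscripts denote partial derivatives. All integrals in $x,y$ are over one period $[0,L_x]\times[0,L_y]$. Surfaces and measures: $\Sigma_u=\{u=0,\ 0\le z\le T\}$ with $d\Sigma_u=dz\,dx\,dy$; $\Sigma_z=\{z=0,\ 0\le u\le T\}$ with $d\Sigma_z=du\,dx\,dy$; $\Sigma_T=\{u+z=T,\ 0\le z\le T\}$, on which an integral $\int_{\Sigma_T}F\,d\Sigma_T$ means $\int_0^T\int\int F(T-z,x,y,z)\,dx\,dy\,dz$. *)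

(* Defs.v *)
From Stdlib Require Import Reals Lra.
From Coquelicot Require Import Coquelicot.
Open Scope R_scope.

Definition fun4 := R -> R -> R -> R -> R.

(* Partial derivative with respect to coordinate i (0 = u, 1 = x, 2 = y, 3 = z). *)
Definition pd (i : nat) (f : fun4) : fun4 :=
  fun u x y z =>
    match i with
    | 0%nat => Derive (fun t => f t x y z) u
    | 1%nat => Derive (fun t => f u t y z) x
    | 2%nat => Derive (fun t => f u x t z) y
    | _ => Derive (fun t => f u x y t) z
    end.

Definition ex_pd (i : nat) (f : fun4) (u x y z : R) : Prop :=
  match i with
  | 0%nat => ex_derive (fun t => f t x y z) u
  | 1%nat => ex_derive (fun t => f u t y z) x
  | 2%nat => ex_derive (fun t => f u x t z) y
  | _ => ex_derive (fun t => f u x y t) z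
  end.

Definition cont4_at (g : fun4) (u x y z : R) : Prop :=
  forall eps : R, 0 < eps -> exists delta : R, 0 < delta /\
    forall u' x' y' z' : R,
      Rabs (u' - u) < delta -> Rabs (x' - x) < delta ->
      Rabs (y' - y) < delta -> Rabs (z' - z) < delta ->
      Rabs (g u' x' y' z' - g u x y z) < eps.

Definition C2_at (f : fun4) (u x y z : R) : Prop :=
  exists d : R, 0 < d /\
    forall u' x' y' z' : R,
      Rabs (u' - u) < d -> Rabs (x' - x) < d ->
      Rabs (y' - y) < d -> Rabs (z' - z) < d ->
      cont4_at f u' x' y' z' /\
      forall i j : nat, (i < 4)%nat -> (j < 4)%nat ->
        ex_pd i f u' x' y' z' /\ ex_pd j (pd i f) u' x' y' z' /\
        cont4_at (pd i f) u' x' y' z' /\ cont4_at (pd j (pd i f)) u' x' y' z'.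

Definition in_wedge (T u z : R) : Prop := 0 <= u /\ 0 <= z /\ u + z <= T.

Definition periodic_xy (T Lx Ly : R) (f : fun4) : Prop :=
  forall u x y z, in_wedge T u z ->
    f u (x + Lx) y z = f u x y z /\ f u x (y + Ly) z = f u x y z.

Definition int_xy (Lx Ly : R) (g : R -> R -> R) : R :=
  RInt (fun x => RInt (fun y => g x y) 0 Ly) 0 Lx.

Definition int_Sigma_u (T Lx Ly : R) (F : fun4) : R :=
  RInt (fun z => int_xy Lx Ly (fun x y => F 0 x y z)) 0 T.

Definition int_Sigma_z (T Lx Ly : R) (F : fun4) : R :=
  RInt (fun u => int_xy Lx Ly (fun x y => F u x y 0)) 0 T.

(* int over Sigma_T = {u + z = T, 0 <= z <= T}, as in the paper:
   int_0^T int int F(T - z, x, y, z) dx dy dz *)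
Definition int_Sigma_T (T Lx Ly : R) (F : fun4) : R :=
  RInt (fun z => int_xy Lx Ly (fun x y => F (T - z) x y z)) 0 T.

Definition pdu := pd 0.
Definition pdx := pd 1.
Definition pdy := pd 2.
Definition pdz := pd 3.

(* Main.v *)
Require Import Defs.
From Stdlib Require Import Reals Lra Lia Classical.
From Coquelicot Require Import Coquelicot.
Open Scope R_scope.

Lemma unif1 (a b : R) (Phi : R -> R -> Prop) :
  (forall t e e', Phi t e -> 0 < e' <= e -> Phi t e') ->
  (forall t, a <= t <= b -> exists e r, 0 < e /\ 0 < r /\
      forall t', a <= t' <= b -> Rabs (t' - t) < r -> Phi t' e) ->
  exists e, 0 < e /\ forall t, a <= t <= b -> Phi t e.
Proof.
  intros Hmon Hloc.
  destruct (Rle_lt_dec a b) as [Hab|Hab]; [|exists 1; split; [lra|intros; lra]].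
  set (E := fun t => a <= t <= b /\ exists e, 0 < e /\ forall t', a <= t' <= t -> Phi t' e).
  assert (Ea : E a).
  { destruct (Hloc a) as (e & r & He & Hr & H); [lra|].
    split; [lra|]. exists e; split; auto. intros t' Ht'.
    apply H; [lra|]. replace (t' - a) with 0 by lra. rewrite Rabs_R0; lra. }
  assert (Hb : bound E). { exists b. intros t [Ht _]. lra. }
  destruct (completeness E Hb (ex_intro _ a Ea)) as [m [Hub Hlub]].
  assert (ham : a <= m) by (apply Hub; exact Ea).
  assert (hmb : m <= b) by (apply Hlub; intros t [Ht _]; lra).
  destruct (Hloc m) as (em & rm & Hem & Hrm & Hm); [lra|].
  assert (Ht1 : exists t1, E t1 /\ m - rm < t1).
  { apply NNPP. intro Hn.
    assert (m <= m - rm); [|lra].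
    apply Hlub. intros t Et. apply Rnot_lt_le. intro Hlt. apply Hn. exists t; auto. }
  destruct Ht1 as (t1 & [Ht1 (e1 & He1 & H1)] & Hlt1).
  set (t2 := Rmin b (m + rm / 2)).
  assert (E2 : E t2).
  { split. { unfold t2; split; [apply Rmin_glb; lra|apply Rmin_l]. }
    exists (Rmin e1 em). split; [apply Rmin_pos; lra|].
    intros t' Ht'.
    destruct (Rle_lt_dec t' t1).
    - apply Hmon with e1; [apply H1; lra|]. split; [apply Rmin_pos; lra|apply Rmin_l].
    - apply Hmon with em; [|split; [apply Rmin_pos; lra|apply Rmin_r]].
      assert (t2 <= b) by apply Rmin_l. assert (t2 <= m + rm/2) by apply Rmin_r.
      apply Hm; [lra|]. apply Rabs_def1; lra. }
  assert (t2 <= m) by (apply Hub; exact E2).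
  assert (t2 = b).
  { unfold t2 in *. destruct (Rle_lt_dec b (m + rm/2)).
    rewrite Rmin_left; auto. rewrite Rmin_right in H; lra. }
  destruct E2 as [_ (e & He & H2)]. exists e; split; auto.
  intros t Ht; apply H2; lra.
Qed.

Definition UP {X : Type} (B : X -> Prop) (N : R -> X -> X -> Prop) :=
  forall Phi : X -> R -> Prop,
  (forall p e e', Phi p e -> 0 < e' <= e -> Phi p e') ->
  (forall p, B p -> exists e r, 0 < e /\ 0 < r /\
      forall p', B p' -> N r p p' -> Phi p' e) ->
  exists e, 0 < e /\ forall p, B p -> Phi p e.

Lemma UP_R (a b : R) : UP (fun t => a <= t <= b) (fun r t t' => Rabs (t' - t) < r).
Proof. intros Phi Hm Hl. apply unif1; auto. Qed.

Lemma UP_prod {X : Type} (B : X -> Prop) N (a b : R) :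
  UP B N ->
  UP (fun q : R * X => a <= fst q <= b /\ B (snd q))
     (fun r q q' => Rabs (fst q' - fst q) < r /\ N r (snd q) (snd q')).
Proof.
  intros HU Phi Hmon Hloc.
  destruct (unif1 a b (fun t e => forall p, B p -> Phi (t, p) e)) as (e & He & H).
  - intros t e e' H1 H2 p Hp. eapply Hmon; eauto.
  - intros t0 Ht0.
    destruct (HU (fun p e => forall t', a <= t' <= b -> Rabs (t' - t0) < e -> Phi (t', p) e))
      as (e' & He' & H').
    + intros p e e' H1 H2 t' Ht' Ht''. eapply Hmon; [apply H1; auto; lra|auto].
    + intros p0 Hp0.
      destruct (Hloc (t0, p0)) as (e & r & He & Hr & Hl); [simpl; auto|].
      exists (Rmin e r), r. split; [apply Rmin_pos; auto|]. split; auto.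
      intros p' Hp' HN t' Ht' Ht''.
      assert (Rmin e r <= r) by apply Rmin_r.
      eapply Hmon; [apply (Hl (t', p')); simpl; auto; split; auto; lra|].
      split; [apply Rmin_pos; auto|apply Rmin_l].
    + exists e', e'. refine (conj He' (conj He' _)).
      intros t' Ht' Hd p Hp. apply (H' p Hp t'); auto.
  - exists e; split; auto. intros [t p] [Ht Hp]; simpl in *. apply H; auto.
Qed.

Lemma ballR (y e z : R) : ball y e z <-> Rabs (z - y) < e.
Proof. reflexivity. Qed.

Lemma cont4_const c u x y z : cont4_at (fun _ _ _ _ => c) u x y z.
Proof. intros e He; exists 1; split; [lra|]. intros. rewrite Rminus_diag, Rabs_R0; auto. Qed.

Lemma cont4_and4 (f g : fun4) u x y z eps1 eps2 :
  (exists d, 0 < d /\ forall u' x' y' z', Rabs (u'-u) < d -> Rabs (x'-x) < d ->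
      Rabs (y'-y) < d -> Rabs (z'-z) < d -> Rabs (f u' x' y' z' - f u x y z) < eps1) ->
  (exists d, 0 < d /\ forall u' x' y' z', Rabs (u'-u) < d -> Rabs (x'-x) < d ->
      Rabs (y'-y) < d -> Rabs (z'-z) < d -> Rabs (g u' x' y' z' - g u x y z) < eps2) ->
  exists d, 0 < d /\ forall u' x' y' z', Rabs (u'-u) < d -> Rabs (x'-x) < d ->
      Rabs (y'-y) < d -> Rabs (z'-z) < d ->
      Rabs (f u' x' y' z' - f u x y z) < eps1 /\ Rabs (g u' x' y' z' - g u x y z) < eps2.
Proof.
  intros (d1 & H1 & F1) (d2 & H2 & F2). exists (Rmin d1 d2); split; [apply Rmin_pos; auto|].
  intros. pose proof (Rmin_l d1 d2). pose proof (Rmin_r d1 d2).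
  split; [apply F1|apply F2]; lra.
Qed.

Lemma cont4_plus (f g : fun4) u x y z : cont4_at f u x y z -> cont4_at g u x y z ->
  cont4_at (fun a b c d => f a b c d + g a b c d) u x y z.
Proof.
  intros Hf Hg e He.
  destruct (cont4_and4 f g u x y z (e/2) (e/2)) as (d & Hd & H); [apply Hf; lra|apply Hg; lra|].
  exists d; split; auto. intros. destruct (H u' x' y' z') as [A B]; auto.
  replace (f u' x' y' z' + g u' x' y' z' - (f u x y z + g u x y z)) with
   ((f u' x' y' z' - f u x y z) + (g u' x' y' z' - g u x y z)) by ring.
  eapply Rle_lt_trans; [apply Rabs_triang|lra].
Qed.

Lemma cont4_opp (f : fun4) u x y z : cont4_at f u x y z ->
  cont4_at (fun a b c d => - f a b c d) u x y z.
Proof.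
  intros Hf e He. destruct (Hf e He) as (d & Hd & H). exists d; split; auto. intros.
  replace (- f u' x' y' z' - - f u x y z) with (- (f u' x' y' z' - f u x y z)) by ring.
  rewrite Rabs_Ropp; auto.
Qed.

Lemma cont4_mult (f g : fun4) u x y z : cont4_at f u x y z -> cont4_at g u x y z ->
  cont4_at (fun a b c d => f a b c d * g a b c d) u x y z.
Proof.
  intros Hf Hg e He.
  set (f0 := f u x y z). set (g0 := g u x y z).
  assert (Hf0 : 0 <= Rabs f0) by apply Rabs_pos.
  assert (Hg0 : 0 <= Rabs g0) by apply Rabs_pos.
  set (e1 := e / (2 * (Rabs g0 + 1))). set (e2 := Rmin 1 (e / (2 * (Rabs f0 + 1)))).
  assert (He1 : 0 < e1) by (unfold e1; apply Rdiv_lt_0_compat; lra).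
  assert (He2 : 0 < e2) by (unfold e2; apply Rmin_pos; [lra|apply Rdiv_lt_0_compat; lra]).
  destruct (cont4_and4 f g u x y z e1 e2) as (d & Hd & H); [apply Hf; lra|apply Hg; lra|].
  exists d; split; auto. intros. destruct (H u' x' y' z') as [A B]; auto.
  fold f0 g0 in A, B |- *.
  set (f1 := f u' x' y' z') in *. set (g1 := g u' x' y' z') in *.
  replace (f1 * g1 - f0 * g0) with ((f1 - f0) * g1 + f0 * (g1 - g0)) by ring.
  eapply Rle_lt_trans; [apply Rabs_triang|]. rewrite !Rabs_mult.
  assert (Rabs g1 <= Rabs g0 + 1).
  { replace g1 with (g0 + (g1 - g0)) by ring. eapply Rle_trans; [apply Rabs_triang|].
    assert (e2 <= 1) by apply Rmin_l. lra. }
  assert (Rabs (f1 - f0) * Rabs g1 <= Rabs (f1 - f0) * (Rabs g0 + 1)).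
  { apply Rmult_le_compat_l; [apply Rabs_pos|lra]. }
  assert (Rabs (f1 - f0) * (Rabs g0 + 1) < e1 * (Rabs g0 + 1)).
  { apply Rmult_lt_compat_r; lra. }
  assert (Rabs f0 * Rabs (g1 - g0) <= (Rabs f0 + 1) * e2).
  { apply Rmult_le_compat; try apply Rabs_pos; lra. }
  assert (e1 * (Rabs g0 + 1) = e / 2) by (unfold e1; field; lra).
  assert ((Rabs f0 + 1) * e2 <= e / 2).
  { assert (e2 <= e / (2 * (Rabs f0 + 1))) by apply Rmin_r.
    replace (e/2) with ((Rabs f0 + 1) * (e / (2 * (Rabs f0 + 1)))) by (field; lra).
    apply Rmult_le_compat_l; lra. }
  lra.
Qed.

Lemma cont4_filterlim {T : Type} (F : (T -> Prop) -> Prop) {FF : Filter F}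
  (g : fun4) U X Y Z u x y z :
  cont4_at g u x y z ->
  filterlim U F (locally u) -> filterlim X F (locally x) ->
  filterlim Y F (locally y) -> filterlim Z F (locally z) ->
  filterlim (fun t => g (U t) (X t) (Y t) (Z t)) F (locally (g u x y z)).
Proof.
  intros Hg HU HX HY HZ. apply filterlim_locally. intros eps.
  destruct (Hg eps (cond_pos eps)) as (d & Hd & H).
  apply filterlim_locally with (eps := mkposreal d Hd) in HU.
  apply filterlim_locally with (eps := mkposreal d Hd) in HX.
  apply filterlim_locally with (eps := mkposreal d Hd) in HY.
  apply filterlim_locally with (eps := mkposreal d Hd) in HZ.
  generalize (filter_and _ _ HU (filter_and _ _ HX (filter_and _ _ HY HZ))).
  apply filter_imp. intros t (A & B & C & D). apply ballR. apply ballR in A, B, C, D.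
  simpl in *. apply H; auto.
Qed.

Lemma cont_eps (f : R -> R) x :
  (forall e, 0 < e -> exists d, 0 < d /\ forall y, Rabs (y - x) < d -> Rabs (f y - f x) < e) ->
  continuous f x.
Proof.
  intros H. apply filterlim_locally. intros eps.
  destruct (H eps (cond_pos eps)) as (d & Hd & Hd'). exists (mkposreal d Hd).
  intros y Hy. apply ballR. apply Hd'. apply ballR in Hy. exact Hy.
Qed.

Lemma cont2_eps (f : R -> R -> R) a b :
  (forall e, 0 < e -> exists d, 0 < d /\ forall a' b', Rabs (a' - a) < d -> Rabs (b' - b) < d ->
     Rabs (f a' b' - f a b) < e) ->
  continuity_2d_pt f a b.
Proof.
  intros H eps. destruct (H eps (cond_pos eps)) as (d & Hd & Hd'). exists (mkposreal d Hd).
  intros; apply Hd'; auto.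
Qed.

Lemma is_derive_plusR (f g : R -> R) (x a b : R) :
  is_derive f x a -> is_derive g x b -> is_derive (fun t => f t + g t) x (a + b).
Proof. intros; apply (is_derive_plus f g); auto. Qed.

Lemma is_derive_multR (f g : R -> R) (x a b : R) :
  is_derive f x a -> is_derive g x b -> is_derive (fun t => f t * g t) x (a * g x + f x * b).
Proof. intros; apply (is_derive_mult f g); auto. intros; apply Rmult_comm. Qed.

Lemma is_derive_constR (c x : R) : is_derive (fun _ => c) x 0.
Proof. apply (is_derive_const (K:=R_AbsRing) (V:=R_NormedModule)). Qed.

Lemma is_derive_ext' (f g : R -> R) (x l l' : R) :
  (forall t, f t = g t) -> l = l' -> is_derive f x l -> is_derive g x l'.
Proof. intros H1 H2 H3. subst. eapply is_derive_ext; eauto. Qed.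

Lemma ex_RInt_contR (f : R -> R) a b :
  (forall z, Rmin a b <= z <= Rmax a b -> continuous f z) -> ex_RInt f a b.
Proof. apply (@ex_RInt_continuous R_CompleteNormedModule). Qed.

Lemma is_RInt_uniqueR (f : R -> R) a b (l : R) : is_RInt f a b l -> RInt f a b = l.
Proof. apply (@is_RInt_unique R_CompleteNormedModule). Qed.

Lemma tube {X : Type} (D : R -> X -> Prop) (k : X -> R -> R) q0 a b :
  (forall e e' q, D e' q -> e' <= e -> D e q) ->
  (forall e, 0 < e -> D e q0) ->
  (forall y, a <= y <= b -> forall e, 0 < e -> exists d, 0 < d /\
      forall q y', D d q -> Rabs (y' - y) < d -> Rabs (k q y' - k q0 y) < e) ->
  forall e, 0 < e -> exists d, 0 < d /\ forall q, D d q -> forall y, a <= y <= b ->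
      Rabs (k q y - k q0 y) < e.
Proof.
  intros Hmon Hq0 H e He.
  destruct (unif1 a b (fun y d => forall q, D d q -> Rabs (k q y - k q0 y) < e)) as (d & Hd & H').
  - intros y d d' H1 [H2 H3] q Hq. apply H1. eapply Hmon; eauto.
  - intros y Hy. destruct (H y Hy (e/2)) as (d & Hd & Hd'); [lra|].
    exists d, d. split; auto. split; auto. intros y' Hy' Hyy q Hq.
    assert (A := Hd' q y' Hq Hyy). assert (B := Hd' q0 y' (Hq0 d Hd) Hyy).
    replace (k q y' - k q0 y') with ((k q y' - k q0 y) - (k q0 y' - k q0 y)) by ring.
    eapply Rle_lt_trans; [apply Rabs_triang|]. rewrite Rabs_Ropp. lra.
  - exists d; split; [exact Hd|]. intros q Hq y Hy. apply (H' y Hy q Hq).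
Qed.

Lemma RInt_diff_bound (f g : R -> R) a b e :
  a <= b -> ex_RInt f a b -> ex_RInt g a b ->
  (forall y, a <= y <= b -> Rabs (f y - g y) < e) ->
  Rabs (RInt f a b - RInt g a b) <= (b - a) * e.
Proof.
  intros Hab Hf Hg H.
  assert (E := RInt_minus f g a b Hf Hg). unfold minus, plus, opp in E; simpl in E.
  replace (RInt f a b - RInt g a b) with (RInt (fun x => f x + - g x) a b) by (rewrite E; reflexivity).
  apply abs_RInt_le_const; auto.
  - apply (ex_RInt_minus f g); auto.
  - intros t Ht. left. apply H; auto.
Qed.

Lemma param_deriv (f df : R -> R -> R) p0 a b r :
  0 < r -> a <= b ->
  (forall p y, Rabs (p - p0) < r -> a - r < y < b + r -> is_derive (fun t => f t y) p (df p y)) ->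
  (forall p y, Rabs (p - p0) < r -> a - r < y < b + r -> continuity_2d_pt df p y) ->
  (forall p y, Rabs (p - p0) < r -> a - r < y < b + r -> continuity_2d_pt f p y) ->
  is_derive (fun p => RInt (f p) a b) p0 (RInt (df p0) a b).
Proof.
  intros Hr Hab Hd Hcd Hcf.
  assert (Hmin : Rmin a b = a) by (apply Rmin_left; auto).
  assert (Hmax : Rmax a b = b) by (apply Rmax_right; auto).
  assert (E : RInt (df p0) a b = RInt (fun t => Derive (fun u => f u t) p0) a b).
  { apply RInt_ext. intros t Ht. symmetry. apply is_derive_unique. apply Hd.
    rewrite Rminus_diag, Rabs_R0; auto. rewrite Hmin, Hmax in Ht. lra. }
  rewrite E.
  apply (is_derive_RInt_param (fun p t => f p t) a b p0).
  - exists (mkposreal r Hr). intros p Hp t Ht. rewrite Hmin, Hmax in Ht.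
    eexists; apply Hd; [apply ballR in Hp; exact Hp|lra].
  - intros t Ht. rewrite Hmin, Hmax in Ht.
    apply continuity_2d_pt_ext_loc with (f := df).
    + exists (mkposreal (r/2) ltac:(lra)). intros u v Hu Hv. simpl in *.
      symmetry. apply is_derive_unique. apply Hd; [|apply Rabs_lt_between' in Hv; lra].
      lra.
    + apply Hcd; [rewrite Rminus_diag, Rabs_R0; auto|lra].
  - exists (mkposreal r Hr). intros p Hp. apply ballR in Hp.
    apply ex_RInt_contR. intros z Hz. rewrite Hmin, Hmax in Hz.
    apply cont_eps. intros e He.
    destruct (Hcf p z Hp ltac:(lra) (mkposreal e He)) as (d & Hd').
    exists d; split; [apply cond_pos|]. intros y Hy. apply Hd'; auto.
    rewrite Rminus_diag, Rabs_R0; apply cond_pos.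
Qed.

Lemma cont4_y (k : fun4) u x y z : cont4_at k u x y z -> continuous (fun t => k u x t z) y.
Proof.
  intros H. apply cont_eps. intros e He. destruct (H e He) as (d & Hd & H').
  exists d; split; auto. intros t Ht. apply H'; auto; rewrite Rminus_diag, Rabs_R0; auto.
Qed.

Section An.
Variable G : R -> R -> R -> R -> Prop.
Variables Lx Ly : R.
Hypothesis hLx : 0 < Lx.
Hypothesis hLy : 0 < Ly.

Definition slab u0 z0 r : Prop := forall u x y z, Rabs (u - u0) < r -> Rabs (z - z0) < r ->
  -r < x < Lx + r -> -r < y < Ly + r -> G u x y z.

Definition Inner (k : fun4) u x z := RInt (fun y => k u x y z) 0 Ly.
Definition I2 (k : fun4) u z := int_xy Lx Ly (fun x y => k u x y z).

Lemma slab_inner u0 z0 rho u x z : 0 < rho -> slab u0 z0 rho ->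
  Rabs (u - u0) < rho/2 -> Rabs (z - z0) < rho/2 -> -rho/2 < x < Lx + rho/2 ->
  forall u' x' y z', Rabs (u' - u) < rho/2 -> Rabs (x' - x) < rho/2 -> Rabs (z' - z) < rho/2 ->
  0 <= y <= Ly -> G u' x' y z'.
Proof.
  intros Hr Hs Hu Hz Hx u' x' y z' H1 H2 H3 Hy.
  apply Rabs_lt_between' in Hu, Hz, H1, H2, H3.
  apply Hs; try (apply Rabs_lt_between'); lra.
Qed.

Section K.
Variable k : fun4.
Hypothesis Hk : forall u x y z, G u x y z -> cont4_at k u x y z.

Lemma inner_cont u0 x0 z0 rho : 0 < rho ->
  (forall u x y z, Rabs (u - u0) < rho -> Rabs (x - x0) < rho -> Rabs (z - z0) < rho ->
     0 <= y <= Ly -> G u x y z) ->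
  forall e, 0 < e -> exists d, 0 < d /\ forall u x z, Rabs (u - u0) < d -> Rabs (x - x0) < d ->
    Rabs (z - z0) < d -> Rabs (Inner k u x z - Inner k u0 x0 z0) < e.
Proof.
  intros Hr HG e He.
  set (D := fun d (q : R * (R * R)) => Rabs (fst q - u0) < d /\ Rabs (fst (snd q) - x0) < d /\
                                      Rabs (snd (snd q) - z0) < d).
  set (kk := fun (q : R * (R * R)) y => k (fst q) (fst (snd q)) y (snd (snd q))).
  destruct (tube D kk (u0, (x0, z0)) 0 Ly) with (e := e / (2 * Ly)) as (d1 & Hd1 & H1).
  - intros a b q [A [B C]] Hab; repeat split; lra.
  - intros a Ha; unfold D; simpl; rewrite !Rminus_diag, Rabs_R0; repeat split; auto.
  - intros y Hy a Ha. destruct (Hk u0 x0 y z0) with (eps := a) as (d & Hd & H); auto.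
    { apply HG; auto; rewrite Rminus_diag, Rabs_R0; auto. }
    exists d; split; auto. intros [u [x z]] y' [A [B C]] Hyy; simpl in *. unfold kk; simpl.
    apply H; auto.
  - apply Rdiv_lt_0_compat; lra.
  - exists (Rmin d1 rho). split; [apply Rmin_pos; auto|].
    intros u x z Hu Hx Hz.
    pose proof (Rmin_l d1 rho). pose proof (Rmin_r d1 rho).
    eapply Rle_lt_trans.
    + apply (RInt_diff_bound _ _ 0 Ly (e / (2 * Ly))); [lra| | |].
      * apply ex_RInt_contR. intros t Ht. rewrite Rmin_left, Rmax_right in Ht; try lra.
        apply cont4_y. apply Hk. apply HG; auto; lra.
      * apply ex_RInt_contR. intros t Ht. rewrite Rmin_left, Rmax_right in Ht; try lra.
        apply cont4_y. apply Hk. apply HG; auto; rewrite Rminus_diag, Rabs_R0; auto.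
      * intros y Hy. apply (H1 (u, (x, z))); auto. unfold D; simpl; repeat split; lra.
    + replace ((Ly - 0) * (e / (2 * Ly))) with (e / 2) by (field; lra). lra.
Qed.

Lemma inner_cont_x u x z rho : 0 < rho ->
  (forall u' x' y z', Rabs (u' - u) < rho -> Rabs (x' - x) < rho -> Rabs (z' - z) < rho ->
     0 <= y <= Ly -> G u' x' y z') ->
  continuous (fun t => Inner k u t z) x.
Proof.
  intros Hr HG. apply cont_eps. intros e He.
  destruct (inner_cont u x z rho Hr HG e He) as (d & Hd & H).
  exists d; split; auto. intros t Ht. apply H; auto; rewrite Rminus_diag, Rabs_R0; auto.
Qed.

Lemma ex_RInt_Inner u0 z0 rho u z : 0 < rho -> slab u0 z0 rho ->
  Rabs (u - u0) < rho/2 -> Rabs (z - z0) < rho/2 -> ex_RInt (fun x => Inner k u x z) 0 Lx.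
Proof.
  intros Hr Hs Hu Hz. apply ex_RInt_contR. intros t Ht.
  rewrite Rmin_left, Rmax_right in Ht; try lra.
  apply (inner_cont_x u t z (rho/2)); [lra|].
  apply (slab_inner u0 z0 rho); auto. lra.
Qed.

Lemma I2_cont u0 z0 rho : 0 < rho -> slab u0 z0 rho ->
  forall e, 0 < e -> exists d, 0 < d /\ forall u z, Rabs (u - u0) < d -> Rabs (z - z0) < d ->
    Rabs (I2 k u z - I2 k u0 z0) < e.
Proof.
  intros Hr Hs e He.
  set (D := fun d (q : R * R) => Rabs (fst q - u0) < d /\ Rabs (snd q - z0) < d).
  set (kk := fun (q : R * R) x => Inner k (fst q) x (snd q)).
  destruct (tube D kk (u0, z0) 0 Lx) with (e := e / (2 * Lx)) as (d1 & Hd1 & H1).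
  - intros a b q [A B] Hab; split; lra.
  - intros a Ha; unfold D; simpl; rewrite !Rminus_diag, Rabs_R0; split; auto.
  - intros x Hx a Ha.
    destruct (inner_cont u0 x z0 (rho/2)) with (e := a) as (d & Hd & H); auto; [lra| |].
    { apply (slab_inner u0 z0 rho); auto; try rewrite Rminus_diag, Rabs_R0; lra. }
    exists d; split; auto. intros [u z] x' [A B] Hxx; simpl in *. unfold kk; simpl.
    apply H; auto.
  - apply Rdiv_lt_0_compat; lra.
  - exists (Rmin d1 (rho/2)). split; [apply Rmin_pos; lra|].
    intros u z Hu Hz.
    pose proof (Rmin_l d1 (rho/2)). pose proof (Rmin_r d1 (rho/2)).
    eapply Rle_lt_trans.
    + apply (RInt_diff_bound (fun x => Inner k u x z) (fun x => Inner k u0 x z0) 0 Lx (e / (2 * Lx)));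
        [lra| | |].
      * apply (ex_RInt_Inner u0 z0 rho); auto; lra.
      * apply (ex_RInt_Inner u0 z0 rho); auto; rewrite Rminus_diag, Rabs_R0; lra.
      * intros x Hx. apply (H1 (u, z)); auto. unfold D; simpl; split; lra.
    + replace ((Lx - 0) * (e / (2 * Lx))) with (e / 2) by (field; lra). lra.
Qed.

End K.


Lemma cont4_2d_uy (k : fun4) u x y z : cont4_at k u x y z ->
  continuity_2d_pt (fun a b => k a x b z) u y.
Proof.
  intros H. apply cont2_eps. intros e He. destruct (H e He) as (d & Hd & H').
  exists d; split; auto. intros. apply H'; auto; rewrite Rminus_diag, Rabs_R0; auto.
Qed.

Lemma cont4_2d_xy (k : fun4) u x y z : cont4_at k u x y z ->
  continuity_2d_pt (fun a b => k u a b z) x y.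
Proof.
  intros H. apply cont2_eps. intros e He. destruct (H e He) as (d & Hd & H').
  exists d; split; auto. intros. apply H'; auto; rewrite Rminus_diag, Rabs_R0; auto.
Qed.

Section KD.
Variables k dk : fun4.
Hypothesis Hk : forall u x y z, G u x y z -> cont4_at k u x y z.
Hypothesis Hdk : forall u x y z, G u x y z -> cont4_at dk u x y z.

Section U.
Hypothesis Hd : forall u x y z, G u x y z -> is_derive (fun t => k t x y z) u (dk u x y z).

Lemma inner_deriv u0 x0 z0 r : 0 < r ->
  (forall u y, Rabs (u - u0) < r -> -r < y < Ly + r -> G u x0 y z0) ->
  is_derive (fun u => Inner k u x0 z0) u0 (Inner dk u0 x0 z0).
Proof.
  intros Hr HG. unfold Inner.
  apply (param_deriv (fun p y => k p x0 y z0) (fun p y => dk p x0 y z0) u0 0 Ly r); auto; try lra.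
  - intros p y Hp Hy. apply Hd. apply HG; auto; lra.
  - intros p y Hp Hy. apply cont4_2d_uy. apply Hdk. apply HG; auto; lra.
  - intros p y Hp Hy. apply cont4_2d_uy. apply Hk. apply HG; auto; lra.
Qed.

Lemma I2_deriv_u u0 z0 rho : 0 < rho -> slab u0 z0 rho ->
  is_derive (fun u => I2 k u z0) u0 (I2 dk u0 z0).
Proof.
  intros Hr Hs. unfold I2, int_xy.
  apply (param_deriv (fun p x => Inner k p x z0) (fun p x => Inner dk p x z0) u0 0 Lx (rho/2));
    try lra.
  - intros p x Hp Hx. apply (inner_deriv p x z0 (rho/2)); [lra|].
    intros u y Hu Hy. apply Rabs_lt_between' in Hp, Hu. apply Hs; try apply Rabs_lt_between';
      rewrite ?Rminus_diag, ?Rabs_R0; lra.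
  - intros p x Hp Hx. apply cont2_eps. intros e He.
    destruct (inner_cont dk Hdk p x z0 (rho/2)) with (e := e) as (d & Hd' & H); auto; [lra| |].
    { apply (slab_inner u0 z0 rho); auto; rewrite ?Rminus_diag, ?Rabs_R0; lra. }
    exists d; split; auto. intros a b Ha Hb. apply H; auto; rewrite Rminus_diag, Rabs_R0; auto.
  - intros p x Hp Hx. apply cont2_eps. intros e He.
    destruct (inner_cont k Hk p x z0 (rho/2)) with (e := e) as (d & Hd' & H); auto; [lra| |].
    { apply (slab_inner u0 z0 rho); auto; rewrite ?Rminus_diag, ?Rabs_R0; lra. }
    exists d; split; auto. intros a b Ha Hb. apply H; auto; rewrite Rminus_diag, Rabs_R0; auto.
Qed.
End U.

Lemma I2_dx_zero u0 z0 rho : 0 < rho -> slab u0 z0 rho ->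
  (forall u x y z, G u x y z -> is_derive (fun t => k u t y z) x (dk u x y z)) ->
  (forall y, k u0 Lx y z0 = k u0 0 y z0) ->
  I2 dk u0 z0 = 0.
Proof.
  intros Hr Hs Hd Hper. unfold I2, int_xy.
  assert (HI : is_RInt (fun x => Inner dk u0 x z0) 0 Lx
                 (minus (Inner k u0 Lx z0) (Inner k u0 0 z0))).
  { apply (is_RInt_derive (fun x => Inner k u0 x z0)).
    - intros x Hx. rewrite Rmin_left, Rmax_right in Hx; try lra. unfold Inner.
      apply (param_deriv (fun p y => k u0 p y z0) (fun p y => dk u0 p y z0) x 0 Ly (rho/2));
        try lra.
      + intros p y Hp Hy. apply Hd. apply Rabs_lt_between' in Hp. apply Hs;
          rewrite ?Rminus_diag, ?Rabs_R0; lra.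
      + intros p y Hp Hy. apply cont4_2d_xy. apply Hdk. apply Rabs_lt_between' in Hp. apply Hs;
          rewrite ?Rminus_diag, ?Rabs_R0; lra.
      + intros p y Hp Hy. apply cont4_2d_xy. apply Hk. apply Rabs_lt_between' in Hp. apply Hs;
          rewrite ?Rminus_diag, ?Rabs_R0; lra.
    - intros x Hx. rewrite Rmin_left, Rmax_right in Hx; try lra.
      apply (inner_cont_x dk Hdk u0 x z0 (rho/2)); [lra|].
      apply (slab_inner u0 z0 rho); auto; rewrite ?Rminus_diag, ?Rabs_R0; lra. }
  apply is_RInt_unique in HI. simpl in HI. change (RInt (fun x => Inner dk u0 x z0) 0 Lx = 0).
  rewrite HI.
  unfold Inner. rewrite (RInt_ext (fun y => k u0 Lx y z0) (fun y => k u0 0 y z0)).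
  - unfold minus, plus, opp; simpl; ring.
  - intros; apply Hper.
Qed.

Lemma I2_dy_zero u0 z0 rho : 0 < rho -> slab u0 z0 rho ->
  (forall u x y z, G u x y z -> is_derive (fun t => k u x t z) y (dk u x y z)) ->
  (forall x, k u0 x Ly z0 = k u0 x 0 z0) ->
  I2 dk u0 z0 = 0.
Proof.
  intros Hr Hs Hd Hper. unfold I2, int_xy.
  rewrite (RInt_ext _ (fun _ => 0)).
  - rewrite RInt_const. unfold scal; simpl; unfold mult; simpl; ring.
  - intros x Hx. rewrite Rmin_left, Rmax_right in Hx; try lra.
    assert (HI : is_RInt (fun y => dk u0 x y z0) 0 Ly (minus (k u0 x Ly z0) (k u0 x 0 z0))).
    2:{ apply is_RInt_uniqueR in HI. rewrite HI, Hper. unfold minus, plus, opp; simpl; ring. }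
    apply (is_RInt_derive (fun y => k u0 x y z0)).
    + intros y Hy. rewrite Rmin_left, Rmax_right in Hy; try lra. apply Hd.
      apply Hs; rewrite ?Rminus_diag, ?Rabs_R0; lra.
    + intros y Hy. rewrite Rmin_left, Rmax_right in Hy; try lra. apply cont4_y. apply Hdk.
      apply Hs; rewrite ?Rminus_diag, ?Rabs_R0; lra.
Qed.
End KD.


Lemma Inner_plus (k1 k2 : fun4) u x z :
  (forall y, 0 <= y <= Ly -> cont4_at k1 u x y z /\ cont4_at k2 u x y z) ->
  Inner (fun a b c d => k1 a b c d + k2 a b c d) u x z = Inner k1 u x z + Inner k2 u x z.
Proof.
  intros H. unfold Inner.
  apply (RInt_plus (V := R_CompleteNormedModule) (fun y => k1 u x y z) (fun y => k2 u x y z));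
   apply ex_RInt_contR; intros t Ht; rewrite Rmin_left, Rmax_right in Ht; try lra;
   apply cont4_y; apply H; auto.
Qed.

Lemma I2_plus (k1 k2 : fun4) u0 z0 rho :
  (forall u x y z, G u x y z -> cont4_at k1 u x y z) ->
  (forall u x y z, G u x y z -> cont4_at k2 u x y z) ->
  0 < rho -> slab u0 z0 rho ->
  I2 (fun a b c d => k1 a b c d + k2 a b c d) u0 z0 = I2 k1 u0 z0 + I2 k2 u0 z0.
Proof.
  intros H1 H2 Hr Hs. unfold I2, int_xy.
  change (RInt (fun x => Inner (fun a b c d => k1 a b c d + k2 a b c d) u0 x z0) 0 Lx =
          RInt (fun x => Inner k1 u0 x z0) 0 Lx + RInt (fun x => Inner k2 u0 x z0) 0 Lx).
  rewrite (RInt_ext _ (fun x => Inner k1 u0 x z0 + Inner k2 u0 x z0)).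
  - apply (RInt_plus (V := R_CompleteNormedModule) (fun x => Inner k1 u0 x z0) (fun x => Inner k2 u0 x z0)).
    + apply (ex_RInt_Inner k1 H1 u0 z0 rho); auto; rewrite Rminus_diag, Rabs_R0; lra.
    + apply (ex_RInt_Inner k2 H2 u0 z0 rho); auto; rewrite Rminus_diag, Rabs_R0; lra.
  - intros x Hx. rewrite Rmin_left, Rmax_right in Hx; try lra.
    apply Inner_plus. intros y Hy.
    split; [apply H1|apply H2]; apply Hs; rewrite ?Rminus_diag, ?Rabs_R0; lra.
Qed.

Lemma I2_scal (c : R) (k : fun4) u0 z0 rho :
  (forall u x y z, G u x y z -> cont4_at k u x y z) ->
  0 < rho -> slab u0 z0 rho ->
  I2 (fun a b c' d => c * k a b c' d) u0 z0 = c * I2 k u0 z0.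
Proof.
  intros H1 Hr Hs. unfold I2, int_xy.
  change (RInt (fun x => Inner (fun a b c' d => c * k a b c' d) u0 x z0) 0 Lx =
          c * RInt (fun x => Inner k u0 x z0) 0 Lx).
  rewrite (RInt_ext _ (fun x => c * Inner k u0 x z0)).
  - apply (RInt_scal (V := R_CompleteNormedModule) (fun x => Inner k u0 x z0)).
    apply (ex_RInt_Inner k H1 u0 z0 rho); auto; rewrite Rminus_diag, Rabs_R0; lra.
  - intros x Hx. rewrite Rmin_left, Rmax_right in Hx; try lra. unfold Inner.
    apply (RInt_scal (V := R_CompleteNormedModule) (fun y => k u0 x y z0)).
    apply ex_RInt_contR; intros t Ht; rewrite Rmin_left, Rmax_right in Ht; try lra.
    apply cont4_y. apply H1. apply Hs; rewrite ?Rminus_diag, ?Rabs_R0; lra.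
Qed.

Lemma I2_le (k1 k2 : fun4) u0 z0 rho :
  (forall u x y z, G u x y z -> cont4_at k1 u x y z) ->
  (forall u x y z, G u x y z -> cont4_at k2 u x y z) ->
  0 < rho -> slab u0 z0 rho ->
  (forall x y, 0 <= x <= Lx -> 0 <= y <= Ly -> k1 u0 x y z0 <= k2 u0 x y z0) ->
  I2 k1 u0 z0 <= I2 k2 u0 z0.
Proof.
  intros H1 H2 Hr Hs Hle. unfold I2, int_xy.
  change (RInt (fun x => Inner k1 u0 x z0) 0 Lx <= RInt (fun x => Inner k2 u0 x z0) 0 Lx).
  apply RInt_le; try lra.
  - apply (ex_RInt_Inner k1 H1 u0 z0 rho); auto; rewrite Rminus_diag, Rabs_R0; lra.
  - apply (ex_RInt_Inner k2 H2 u0 z0 rho); auto; rewrite Rminus_diag, Rabs_R0; lra.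
  - intros x Hx. unfold Inner. apply RInt_le; try lra.
    + apply ex_RInt_contR; intros t Ht; rewrite Rmin_left, Rmax_right in Ht; try lra.
      apply cont4_y. apply H1. apply Hs; rewrite ?Rminus_diag, ?Rabs_R0; lra.
    + apply ex_RInt_contR; intros t Ht; rewrite Rmin_left, Rmax_right in Ht; try lra.
      apply cont4_y. apply H2. apply Hs; rewrite ?Rminus_diag, ?Rabs_R0; lra.
    + intros y Hy. apply Hle; lra.
Qed.

Lemma I2_cont2 (k : fun4) u0 z0 rho :
  (forall u x y z, G u x y z -> cont4_at k u x y z) ->
  0 < rho -> slab u0 z0 rho -> continuity_2d_pt (I2 k) u0 z0.
Proof.
  intros Hk Hr Hs. apply cont2_eps. intros e He. apply (I2_cont k Hk u0 z0 rho); auto.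
Qed.
End An.

Definition sw (k : fun4) : fun4 := fun a x y b => k b x y a.

Lemma cont4_sw (k : fun4) u x y z : cont4_at k z x y u -> cont4_at (sw k) u x y z.
Proof.
  intros H e He. destruct (H e He) as (d & Hd & H'). exists d; split; auto.
  intros. unfold sw. apply H'; auto.
Qed.

Lemma I2_deriv_z (G : R -> R -> R -> R -> Prop) Lx Ly (k dk : fun4) u0 z0 rho :
  0 < Lx -> 0 < Ly ->
  (forall u x y z, G u x y z -> cont4_at k u x y z) ->
  (forall u x y z, G u x y z -> cont4_at dk u x y z) ->
  (forall u x y z, G u x y z -> is_derive (fun t => k u x y t) z (dk u x y z)) ->
  0 < rho -> slab G Lx Ly u0 z0 rho ->
  is_derive (fun z => I2 Lx Ly k u0 z) z0 (I2 Lx Ly dk u0 z0).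
Proof.
  intros hLx hLy Hk Hdk Hd Hr Hs.
  apply (I2_deriv_u (fun a x y b => G b x y a) Lx Ly hLx hLy (sw k) (sw dk)) with (rho := rho).
  - intros; apply cont4_sw; auto.
  - intros; apply cont4_sw; auto.
  - intros; apply Hd; auto.
  - auto.
  - intros u x y z H1 H2 H3 H4. apply Hs; auto.
Qed.

Lemma cont2_shift (f : R -> R -> R) u0 v0 :
  continuity_2d_pt f (u0 - v0) v0 -> continuity_2d_pt (fun u v => f (u - v) v) u0 v0.
Proof.
  intros H. apply cont2_eps. intros e He. destruct (H (mkposreal e He)) as [d Hd].
  exists (d/2). split; [apply Rlt_gt, Rdiv_lt_0_compat; [apply cond_pos|lra]|].
  intros u v Hu Hv. apply Hd; auto; [|pose proof (cond_pos d); lra].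
  replace (u - v - (u0 - v0)) with ((u - u0) - (v - v0)) by ring.
  eapply Rle_lt_trans; [apply Rabs_triang|]. rewrite Rabs_Ropp. lra.
Qed.

Lemma cont2_line (f : R -> R -> R) c t0 :
  continuity_2d_pt f (c - t0) t0 -> continuous (fun t => f (c - t) t) t0.
Proof.
  intros H. apply cont_eps. intros e He. destruct (H (mkposreal e He)) as [d Hd].
  exists (d/2). split; [apply Rdiv_lt_0_compat; [apply cond_pos|lra]|].
  intros t Ht. apply Hd; [|pose proof (cond_pos d); lra].
  replace (c - t - (c - t0)) with (- (t - t0)) by ring. rewrite Rabs_Ropp.
  pose proof (cond_pos d); lra.
Qed.

Lemma cont2_snd (f : R -> R -> R) x y : continuity_2d_pt f x y -> continuous (fun t => f x t) y.
Proof.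
  intros H. apply cont_eps. intros e He. destruct (H (mkposreal e He)) as [d Hd].
  exists d. split; [apply cond_pos|]. intros t Ht. apply Hd; auto.
  rewrite Rminus_diag, Rabs_R0; apply cond_pos.
Qed.

Lemma cont2_fst (f : R -> R -> R) x y : continuity_2d_pt f x y -> continuous (fun t => f t y) x.
Proof.
  intros H. apply cont_eps. intros e He. destruct (H (mkposreal e He)) as [d Hd].
  exists d. split; [apply cond_pos|]. intros t Ht. apply Hd; auto.
  rewrite Rminus_diag, Rabs_R0; apply cond_pos.
Qed.

Lemma deriv_shift (f : R -> R -> R) x0 t l :
  is_derive (fun u => f u t) (x0 - t) l -> is_derive (fun u => f (u - t) t) x0 l.
Proof.
  intros H.
  assert (Hg : is_derive (fun u : R => u - t) x0 1) by (auto_derive; [auto|ring]).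
  pose proof (is_derive_comp (fun u => f u t) (fun u => u - t) x0 l 1 H Hg) as H2.
  eapply is_derive_ext'; [| |exact H2]; [intros; reflexivity|].
  unfold scal; simpl; unfold mult; simpl; ring.
Qed.


Lemma continuous_plusR (f g : R -> R) x :
  continuous f x -> continuous g x -> continuous (fun t => f t + g t) x.
Proof. intros; apply (continuous_plus (V := R_NormedModule) f g x); auto. Qed.

Lemma continuous_pt_of (f : R -> R) x : continuous f x -> continuity_pt f x.
Proof. intros H; apply continuity_pt_filterlim; exact H. Qed.

Lemma ballR' (y e z : R) : ball y e z -> Rabs (z - y) < e.
Proof. intros H; exact H. Qed.

Section Tri.
Variables (T rho : R) (S2 : R -> R -> Prop) (a b au bu bz : R -> R -> R).
Hypothesis hT : 0 < T.
Hypothesis hr : 0 < rho.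
Hypothesis HS : forall u' z', in_wedge T u' z' -> forall u z,
  Rabs (u - u') < rho -> Rabs (z - z') < rho -> S2 u z.
Hypothesis Hca : forall u z, S2 u z -> continuity_2d_pt a u z.
Hypothesis Hcb : forall u z, S2 u z -> continuity_2d_pt b u z.
Hypothesis Hcau : forall u z, S2 u z -> continuity_2d_pt au u z.
Hypothesis Hcbu : forall u z, S2 u z -> continuity_2d_pt bu u z.
Hypothesis Hcbz : forall u z, S2 u z -> continuity_2d_pt bz u z.
Hypothesis Hda : forall u z, S2 u z -> is_derive (fun t => a t z) u (au u z).
Hypothesis Hdb : forall u z, S2 u z -> is_derive (fun t => b t z) u (bu u z).
Hypothesis Hdbz : forall u z, S2 u z -> is_derive (fun t => b u t) z (bz u z).
Hypothesis Hint : forall u z, 0 < u -> 0 < z -> u + z < T -> au u z + bz u z = 0.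

Lemma nearS2 s s' t : 0 <= s <= T -> Rabs (s' - s) < rho/4 -> -rho/4 < t < s + rho/4 ->
  S2 (s' - t) t.
Proof.
  intros Hs Hs' Ht. apply Rabs_lt_between' in Hs'.
  destruct (Rlt_le_dec t 0).
  - apply (HS s 0); [unfold in_wedge; lra| |]; apply Rabs_lt_between'; lra.
  - destruct (Rlt_le_dec s t).
    + apply (HS 0 s); [unfold in_wedge; lra| |]; apply Rabs_lt_between'; lra.
    + apply (HS (s - t) t); [unfold in_wedge; lra| |]; apply Rabs_lt_between'; lra.
Qed.

Lemma S2_axis t : -rho/2 < t < T + rho/2 -> S2 0 t /\ S2 t 0.
Proof.
  intros Ht. destruct (Rlt_le_dec t 0); [|destruct (Rlt_le_dec T t)].
  - split; [apply (HS 0 0)|apply (HS 0 0)]; try (unfold in_wedge; lra);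
      apply Rabs_lt_between'; lra.
  - split; [apply (HS 0 T)|apply (HS T 0)]; try (unfold in_wedge; lra);
      apply Rabs_lt_between'; lra.
  - split; [apply (HS 0 t)|apply (HS t 0)]; try (unfold in_wedge; lra);
      apply Rabs_lt_between'; lra.
Qed.

Definition e s t := a (s - t) t + b (s - t) t.
Definition de s t := au (s - t) t + bu (s - t) t.

Lemma e_deriv s t : S2 (s - t) t -> is_derive (fun u => e u t) s (de s t).
Proof.
  intros H. unfold e, de. apply is_derive_plusR; apply (deriv_shift (fun u v => _ u v)).
  - apply Hda; auto.
  - apply Hdb; auto.
Qed.

Lemma e_cont_t s t : S2 (s - t) t -> continuous (fun t => e s t) t.
Proof.
  intros H. unfold e. apply continuous_plusR; apply (cont2_line (fun u v => _ u v)); auto.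
Qed.

Lemma e_ex_RInt s y c d : 0 <= s <= T -> Rabs (y - s) < rho/4 ->
  (forall t, Rmin c d <= t <= Rmax c d -> -rho/4 < t < s + rho/4) ->
  ex_RInt (fun t => e y t) c d.
Proof.
  intros Hs Hy Hcd. apply ex_RInt_contR. intros t Ht. apply e_cont_t.
  apply (nearS2 s); auto.
Qed.

Lemma dcont s s' t : 0 <= s <= T -> Rabs (s' - s) < rho/8 -> -rho/8 < t < s + rho/8 ->
  continuity_2d_pt (fun u v => Derive (fun z => e z v) u) s' t.
Proof.
  intros Hs Hs' Ht.
  apply continuity_2d_pt_ext_loc with (f := de).
  - exists (mkposreal (rho/16) ltac:(lra)). intros u v Hu Hv; simpl in *.
    symmetry. apply is_derive_unique. apply e_deriv. apply (nearS2 s); auto.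
    + apply Rabs_lt_between' in Hu, Hs'. apply Rabs_lt_between'; lra.
    + apply Rabs_lt_between' in Hv. lra.
  - unfold de. apply continuity_2d_pt_plus; apply (cont2_shift (fun u v => _ u v));
      [apply Hcau|apply Hcbu]; apply (nearS2 s); auto; lra.
Qed.

Lemma H_deriv s : 0 <= s <= T ->
  is_derive (fun s0 => RInt (fun t => e s0 t) 0 s0) s
    (RInt (fun t => Derive (fun u => e u t) s) 0 s + e s s * 1).
Proof.
  intros Hs.
  apply (is_derive_RInt_param_bound_comp_aux3 e 0 (fun x => x) s 1).
  - exists (mkposreal (rho/4) ltac:(lra)). intros y Hy. apply ballR' in Hy.
    apply (e_ex_RInt s); auto. intros t Ht.
    rewrite Rmin_left, Rmax_right in Ht; lra.
  - exists (mkposreal (rho/8) ltac:(lra)). exists (mkposreal (rho/8) ltac:(lra)).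
    intros y Hy. apply ballR' in Hy. simpl in *.
    apply (e_ex_RInt s); [auto|lra|]. intros t Ht.
    rewrite Rmin_left, Rmax_right in Ht; lra.
  - apply (is_derive_id (K := R_AbsRing)).
  - exists (mkposreal (rho/8) ltac:(lra)). exists (mkposreal (rho/8) ltac:(lra)).
    intros x0 Hx0 t Ht. apply ballR' in Hx0. simpl in *.
    assert (-rho/8 <= t <= s + rho/8).
    { split.
      - eapply Rle_trans; [|apply Ht]. apply Rmin_case; lra.
      - eapply Rle_trans; [apply Ht|]. apply Rmax_case; lra. }
    eexists. apply e_deriv. apply (nearS2 s); auto; lra.
  - intros t Ht. rewrite Rmin_left, Rmax_right in Ht; try lra.
    apply (dcont s); auto; [rewrite Rminus_diag, Rabs_R0|]; lra.
  - exists (mkposreal (rho/8) ltac:(lra)). intros x' t Hx' Ht. simpl in *.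
    apply (dcont s); auto. apply Rabs_lt_between' in Ht. lra.
  - apply continuous_pt_of. apply e_cont_t. apply (nearS2 s); auto;
      [rewrite Rminus_diag, Rabs_R0|]; lra.
Qed.

Lemma g_deriv s t : 0 <= s <= T -> -rho/8 < t < s + rho/8 ->
  is_derive (fun t => b (s - t) t) t (- bu (s - t) t + bz (s - t) t).
Proof.
  intros Hs Ht.
  assert (HD : differentiable_pt_lim b (s - t) t (bu (s - t) t) (bz (s - t) t)).
  { apply filterdiff_differentiable_pt_lim.
    apply (is_derive_filterdiff b (s - t) t bu (bz (s - t) t)).
    - apply (proj1 (locally_2d_locally (fun u v => is_derive (fun z => b z v) u (bu u v)) (s - t) t)). exists (mkposreal (rho/32) ltac:(lra)). intros u v Hu Hv.
      simpl in *. apply Hdb.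
      replace u with ((u + v) - v) by ring. apply (nearS2 s); auto.
      + apply Rabs_lt_between' in Hu, Hv. apply Rabs_lt_between'; lra.
      + apply Rabs_lt_between' in Hv. lra.
    - apply Hdbz. replace (s - t) with (s - t) by ring. apply (nearS2 s); auto;
        [rewrite Rminus_diag, Rabs_R0|]; lra.
    - apply (proj1 (continuity_2d_pt_filterlim bu (s - t) t)). apply Hcbu. apply (nearS2 s); auto;
        [rewrite Rminus_diag, Rabs_R0|]; lra. }
  apply is_derive_Reals.
  replace (- bu (s - t) t + bz (s - t) t) with (bu (s - t) t * (-1) + bz (s - t) t * 1) by ring.
  apply (derivable_pt_lim_comp_2d b (fun t => s - t) (fun t => t)); auto.
  - apply is_derive_Reals. auto_derive; auto; ring.
  - apply is_derive_Reals. auto_derive; auto.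
Qed.

Lemma H_deriv_val s : 0 < s < T ->
  RInt (fun t => Derive (fun u => e u t) s) 0 s + e s s * 1 = a 0 s + b s 0.
Proof.
  intros Hs.
  rewrite (RInt_ext _ (fun t => - (- bu (s - t) t + bz (s - t) t))).
  2:{ intros t Ht. rewrite Rmin_left, Rmax_right in Ht; try lra.
      assert (Hn : S2 (s - t) t) by (apply (nearS2 s); [lra|rewrite Rminus_diag, Rabs_R0|]; lra).
      apply eq_trans with (de s t); [apply is_derive_unique, e_deriv; exact Hn|].
      unfold de. assert (E := Hint (s - t) t ltac:(lra) ltac:(lra) ltac:(lra)). lra. }
  assert (HI : is_RInt (fun t => - (- bu (s - t) t + bz (s - t) t)) 0 s
                 (minus (- b (s - s) s) (- b (s - 0) 0))).
  { apply (is_RInt_derive (fun t => - b (s - t) t)).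
    - intros t Ht. rewrite Rmin_left, Rmax_right in Ht; try lra.
      apply (is_derive_opp (fun t => b (s - t) t)). apply g_deriv; lra.
    - intros t Ht. rewrite Rmin_left, Rmax_right in Ht; try lra.
      apply (continuous_opp (V := R_NormedModule) (fun t => - bu (s - t) t + bz (s - t) t)).
      apply continuous_plusR.
      + apply (continuous_opp (V := R_NormedModule) (fun t => bu (s - t) t)).
        apply (cont2_line (fun u v => bu u v)). apply Hcbu. apply (nearS2 s);
          [lra|rewrite Rminus_diag, Rabs_R0|]; lra.
      + apply (cont2_line (fun u v => bz u v)). apply Hcbz. apply (nearS2 s);
          [lra|rewrite Rminus_diag, Rabs_R0|]; lra. }
  apply is_RInt_uniqueR in HI. rewrite HI.
  unfold e. replace (s - s) with 0 by ring. replace (s - 0) with s by ring.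
  unfold minus, plus, opp; simpl. ring.
Qed.

Definition Gs t := a 0 t + b t 0.

Lemma Gs_cont t : -rho/2 < t < T + rho/2 -> continuous Gs t.
Proof.
  intros Ht. destruct (S2_axis t Ht). unfold Gs. apply continuous_plusR.
  - apply (cont2_snd a). auto.
  - apply (cont2_fst b). auto.
Qed.

Lemma Gs_ex_RInt c d : (forall t, Rmin c d <= t <= Rmax c d -> -rho/2 < t < T + rho/2) ->
  ex_RInt Gs c d.
Proof. intros H. apply ex_RInt_contR. intros t Ht. apply Gs_cont. auto. Qed.

Lemma RInt_Gs_deriv s : 0 <= s <= T -> is_derive (fun s0 => RInt Gs 0 s0) s (Gs s).
Proof.
  intros Hs. apply (is_derive_RInt (V := R_NormedModule) Gs (fun s0 => RInt Gs 0 s0) 0 s).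
  - exists (mkposreal (rho/4) ltac:(lra)). intros y Hy. apply ballR' in Hy. simpl in Hy.
    apply (RInt_correct (V := R_CompleteNormedModule)). apply Gs_ex_RInt. intros t Ht.
    apply Rabs_lt_between' in Hy.
    split.
    + eapply Rlt_le_trans; [|apply Ht]. apply Rmin_case; lra.
    + eapply Rle_lt_trans; [apply Ht|]. apply Rmax_case; lra.
  - apply Gs_cont. lra.
Qed.

Lemma triangle_identity :
  RInt (fun z => a (T - z) z + b (T - z) z) 0 T =
  RInt (fun z => a 0 z) 0 T + RInt (fun u => b u 0) 0 T.
Proof.
  set (Phi := fun s => RInt (fun t => e s t) 0 s - RInt Gs 0 s).
  assert (HPd : forall s, 0 <= s <= T ->
            is_derive Phi s ((RInt (fun t => Derive (fun u => e u t) s) 0 s + e s s * 1) - Gs s)).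
  { intros s Hs. unfold Phi.
    apply (is_derive_minus (fun s0 => RInt (fun t => e s0 t) 0 s0) (fun s0 => RInt Gs 0 s0)).
    - apply H_deriv; auto.
    - apply RInt_Gs_deriv; auto. }
  destruct (MVT_gen Phi 0 T (fun _ => 0)) as (c & Hc & HM).
  - intros x Hx. rewrite Rmin_left, Rmax_right in Hx; try lra.
    eapply is_derive_ext'; [intros; reflexivity| |apply (HPd x); lra].
    rewrite H_deriv_val; [|lra]. apply Rminus_diag_eq; reflexivity.
  - intros x Hx. rewrite Rmin_left, Rmax_right in Hx; try lra.
    apply continuous_pt_of. apply (@ex_derive_continuous R_AbsRing R_NormedModule Phi x). eexists. apply HPd; auto.
  - assert (E0 : Phi 0 = 0).
    { unfold Phi. rewrite !RInt_point. unfold zero; simpl. ring. }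
    rewrite E0 in HM. unfold Phi in HM.
    assert (ET : RInt (fun t => e T t) 0 T = RInt Gs 0 T) by lra.
    unfold e in ET. rewrite ET. unfold Gs.
    apply (RInt_plus (V := R_CompleteNormedModule) (fun z => a 0 z) (fun u => b u 0)).
    + apply ex_RInt_contR. intros t Ht. rewrite Rmin_left, Rmax_right in Ht; try lra.
      apply (cont2_snd a). apply Hca. apply (proj1 (S2_axis t ltac:(lra))).
    + apply ex_RInt_contR. intros t Ht. rewrite Rmin_left, Rmax_right in Ht; try lra.
      apply (cont2_fst b). apply Hcb. apply (proj2 (S2_axis t ltac:(lra))).
Qed.
End Tri.


Definition C2prop (f : fun4) u x y z := cont4_at f u x y z /\
  forall i j, (i < 4)%nat -> (j < 4)%nat ->
    ex_pd i f u x y z /\ ex_pd j (pd i f) u x y z /\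
    cont4_at (pd i f) u x y z /\ cont4_at (pd j (pd i f)) u x y z.

Definition box4 d u x y z u' x' y' z' :=
  Rabs (u' - u) < d /\ Rabs (x' - x) < d /\ Rabs (y' - y) < d /\ Rabs (z' - z) < d.

Lemma thickness (T Lx Ly : R) (Good : R -> R -> R -> R -> Prop) :
  (forall u x y z, in_wedge T u z -> exists d, 0 < d /\
     forall u' x' y' z', box4 d u x y z u' x' y' z' -> Good u' x' y' z') ->
  exists eta, 0 < eta /\ forall u x y z, in_wedge T u z -> 0 <= x <= Lx -> 0 <= y <= Ly ->
     forall u' x' y' z', box4 eta u x y z u' x' y' z' -> Good u' x' y' z'.
Proof.
  intros HG.
  pose proof (UP_prod _ _ 0 T (UP_prod _ _ 0 Lx (UP_prod _ _ 0 Ly (UP_R 0 T)))) as HU.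
  destruct (HU (fun q e => in_wedge T (fst q) (snd (snd (snd q))) ->
     forall u' x' y' z', box4 e (fst q) (fst (snd q)) (fst (snd (snd q))) (snd (snd (snd q)))
        u' x' y' z' -> Good u' x' y' z')) as (eta & Heta & H).
  - intros q e e' H1 H2 Hw u' x' y' z' Hb. apply H1; auto.
    destruct Hb as (A & B & C & D). unfold box4; repeat split; lra.
  - intros [u [x [y z]]] Hq; simpl in *.
    destruct (Rle_lt_dec (u + z) T).
    + destruct (HG u x y z) as (d & Hd & Hd'); [unfold in_wedge; lra|].
      exists (d/2), (d/2). split; [lra|]. split; [lra|].
      intros [u1 [x1 [y1 z1]]] _ HN Hw u' x' y' z' Hb; simpl in *.
      destruct HN as (A & B & C & D). destruct Hb as (A' & B' & C' & D').
      apply Hd'. apply Rabs_lt_between' in A, B, C, D, A', B', C', D'.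
      unfold box4; repeat split; apply Rabs_lt_between'; lra.
    + exists 1, ((u + z - T)/2). split; [lra|]. split; [lra|].
      intros [u1 [x1 [y1 z1]]] _ HN Hw; simpl in *.
      destruct HN as (A & B & C & D). unfold in_wedge in Hw.
      apply Rabs_lt_between' in A, D. lra.
  - exists eta. split; auto. intros u x y z Hw Hx Hy u' x' y' z' Hb.
    apply (H (u, (x, (y, z)))); simpl; auto.
    unfold in_wedge in Hw. repeat split; lra.
Qed.


Lemma box4_refl d u x y z : 0 < d -> box4 d u x y z u x y z.
Proof. intros; unfold box4; rewrite !Rminus_diag, !Rabs_R0; repeat split; auto. Qed.

Lemma schwarz_01 (f : fun4) u x y z :
  (exists d, 0 < d /\ forall u' x' y' z', box4 d u x y z u' x' y' z' -> C2prop f u' x' y' z') ->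
  pd 0 (pd 1 f) u x y z = pd 1 (pd 0 f) u x y z.
Proof.
  intros (d & Hd & H).
  destruct (H u x y z (box4_refl d u x y z Hd)) as [_ Hc].
  apply (Schwarz (fun a b => f a b y z) u x).
  - exists (mkposreal d Hd). intros a b Ha Hb. simpl in *.
    assert (Hb4 : box4 d u x y z a b y z).
    { unfold box4; rewrite ?Rminus_diag, ?Rabs_R0; repeat split; auto. }
    destruct (H _ _ _ _ Hb4) as [_ Hc'].
    destruct (Hc' 0%nat 1%nat) as (A1 & A2 & _); [lia|lia|].
    destruct (Hc' 1%nat 0%nat) as (B1 & B2 & _); [lia|lia|].
    repeat split; [exact A1|exact B1|exact B2|exact A2].
  - destruct (Hc 1%nat 0%nat) as (_ & _ & _ & C); [lia|lia|].
    apply cont2_eps. intros e He. destruct (C e He) as (d' & Hd' & C').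
    exists d'. split; auto. intros a b Ha Hb. apply C'; rewrite ?Rminus_diag, ?Rabs_R0; auto.
  - destruct (Hc 0%nat 1%nat) as (_ & _ & _ & C); [lia|lia|].
    apply cont2_eps. intros e He. destruct (C e He) as (d' & Hd' & C').
    exists d'. split; auto. intros a b Ha Hb. apply C'; rewrite ?Rminus_diag, ?Rabs_R0; auto.
Qed.

Lemma schwarz_02 (f : fun4) u x y z :
  (exists d, 0 < d /\ forall u' x' y' z', box4 d u x y z u' x' y' z' -> C2prop f u' x' y' z') ->
  pd 0 (pd 2 f) u x y z = pd 2 (pd 0 f) u x y z.
Proof.
  intros (d & Hd & H).
  destruct (H u x y z (box4_refl d u x y z Hd)) as [_ Hc].
  apply (Schwarz (fun a b => f a x b z) u y).
  - exists (mkposreal d Hd). intros a b Ha Hb. simpl in *.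
    assert (Hb4 : box4 d u x y z a x b z).
    { unfold box4; rewrite ?Rminus_diag, ?Rabs_R0; repeat split; auto. }
    destruct (H _ _ _ _ Hb4) as [_ Hc'].
    destruct (Hc' 0%nat 2%nat) as (A1 & A2 & _); [lia|lia|].
    destruct (Hc' 2%nat 0%nat) as (B1 & B2 & _); [lia|lia|].
    repeat split; [exact A1|exact B1|exact B2|exact A2].
  - destruct (Hc 2%nat 0%nat) as (_ & _ & _ & C); [lia|lia|].
    apply cont2_eps. intros e He. destruct (C e He) as (d' & Hd' & C').
    exists d'. split; auto. intros a b Ha Hb. apply C'; rewrite ?Rminus_diag, ?Rabs_R0; auto.
  - destruct (Hc 0%nat 2%nat) as (_ & _ & _ & C); [lia|lia|].
    apply cont2_eps. intros e He. destruct (C e He) as (d' & Hd' & C').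
    exists d'. split; auto. intros a b Ha Hb. apply C'; rewrite ?Rminus_diag, ?Rabs_R0; auto.
Qed.

Lemma schwarz_03 (f : fun4) u x y z :
  (exists d, 0 < d /\ forall u' x' y' z', box4 d u x y z u' x' y' z' -> C2prop f u' x' y' z') ->
  pd 0 (pd 3 f) u x y z = pd 3 (pd 0 f) u x y z.
Proof.
  intros (d & Hd & H).
  destruct (H u x y z (box4_refl d u x y z Hd)) as [_ Hc].
  apply (Schwarz (fun a b => f a x y b) u z).
  - exists (mkposreal d Hd). intros a b Ha Hb. simpl in *.
    assert (Hb4 : box4 d u x y z a x y b).
    { unfold box4; rewrite ?Rminus_diag, ?Rabs_R0; repeat split; auto. }
    destruct (H _ _ _ _ Hb4) as [_ Hc'].
    destruct (Hc' 0%nat 3%nat) as (A1 & A2 & _); [lia|lia|].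
    destruct (Hc' 3%nat 0%nat) as (B1 & B2 & _); [lia|lia|].
    repeat split; [exact A1|exact B1|exact B2|exact A2].
  - destruct (Hc 3%nat 0%nat) as (_ & _ & _ & C); [lia|lia|].
    apply cont2_eps. intros e He. destruct (C e He) as (d' & Hd' & C').
    exists d'. split; auto. intros a b Ha Hb. apply C'; rewrite ?Rminus_diag, ?Rabs_R0; auto.
  - destruct (Hc 0%nat 3%nat) as (_ & _ & _ & C); [lia|lia|].
    apply cont2_eps. intros e He. destruct (C e He) as (d' & Hd' & C').
    exists d'. split; auto. intros a b Ha Hb. apply C'; rewrite ?Rminus_diag, ?Rabs_R0; auto.
Qed.

Lemma schwarz_12 (f : fun4) u x y z :
  (exists d, 0 < d /\ forall u' x' y' z', box4 d u x y z u' x' y' z' -> C2prop f u' x' y' z') ->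
  pd 1 (pd 2 f) u x y z = pd 2 (pd 1 f) u x y z.
Proof.
  intros (d & Hd & H).
  destruct (H u x y z (box4_refl d u x y z Hd)) as [_ Hc].
  apply (Schwarz (fun a b => f u a b z) x y).
  - exists (mkposreal d Hd). intros a b Ha Hb. simpl in *.
    assert (Hb4 : box4 d u x y z u a b z).
    { unfold box4; rewrite ?Rminus_diag, ?Rabs_R0; repeat split; auto. }
    destruct (H _ _ _ _ Hb4) as [_ Hc'].
    destruct (Hc' 1%nat 2%nat) as (A1 & A2 & _); [lia|lia|].
    destruct (Hc' 2%nat 1%nat) as (B1 & B2 & _); [lia|lia|].
    repeat split; [exact A1|exact B1|exact B2|exact A2].
  - destruct (Hc 2%nat 1%nat) as (_ & _ & _ & C); [lia|lia|].
    apply cont2_eps. intros e He. destruct (C e He) as (d' & Hd' & C').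
    exists d'. split; auto. intros a b Ha Hb. apply C'; rewrite ?Rminus_diag, ?Rabs_R0; auto.
  - destruct (Hc 1%nat 2%nat) as (_ & _ & _ & C); [lia|lia|].
    apply cont2_eps. intros e He. destruct (C e He) as (d' & Hd' & C').
    exists d'. split; auto. intros a b Ha Hb. apply C'; rewrite ?Rminus_diag, ?Rabs_R0; auto.
Qed.

Lemma schwarz_13 (f : fun4) u x y z :
  (exists d, 0 < d /\ forall u' x' y' z', box4 d u x y z u' x' y' z' -> C2prop f u' x' y' z') ->
  pd 1 (pd 3 f) u x y z = pd 3 (pd 1 f) u x y z.
Proof.
  intros (d & Hd & H).
  destruct (H u x y z (box4_refl d u x y z Hd)) as [_ Hc].
  apply (Schwarz (fun a b => f u a y b) x z).
  - exists (mkposreal d Hd). intros a b Ha Hb. simpl in *.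
    assert (Hb4 : box4 d u x y z u a y b).
    { unfold box4; rewrite ?Rminus_diag, ?Rabs_R0; repeat split; auto. }
    destruct (H _ _ _ _ Hb4) as [_ Hc'].
    destruct (Hc' 1%nat 3%nat) as (A1 & A2 & _); [lia|lia|].
    destruct (Hc' 3%nat 1%nat) as (B1 & B2 & _); [lia|lia|].
    repeat split; [exact A1|exact B1|exact B2|exact A2].
  - destruct (Hc 3%nat 1%nat) as (_ & _ & _ & C); [lia|lia|].
    apply cont2_eps. intros e He. destruct (C e He) as (d' & Hd' & C').
    exists d'. split; auto. intros a b Ha Hb. apply C'; rewrite ?Rminus_diag, ?Rabs_R0; auto.
  - destruct (Hc 1%nat 3%nat) as (_ & _ & _ & C); [lia|lia|].
    apply cont2_eps. intros e He. destruct (C e He) as (d' & Hd' & C').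
    exists d'. split; auto. intros a b Ha Hb. apply C'; rewrite ?Rminus_diag, ?Rabs_R0; auto.
Qed.

Lemma schwarz_23 (f : fun4) u x y z :
  (exists d, 0 < d /\ forall u' x' y' z', box4 d u x y z u' x' y' z' -> C2prop f u' x' y' z') ->
  pd 2 (pd 3 f) u x y z = pd 3 (pd 2 f) u x y z.
Proof.
  intros (d & Hd & H).
  destruct (H u x y z (box4_refl d u x y z Hd)) as [_ Hc].
  apply (Schwarz (fun a b => f u x a b) y z).
  - exists (mkposreal d Hd). intros a b Ha Hb. simpl in *.
    assert (Hb4 : box4 d u x y z u x a b).
    { unfold box4; rewrite ?Rminus_diag, ?Rabs_R0; repeat split; auto. }
    destruct (H _ _ _ _ Hb4) as [_ Hc'].
    destruct (Hc' 2%nat 3%nat) as (A1 & A2 & _); [lia|lia|].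
    destruct (Hc' 3%nat 2%nat) as (B1 & B2 & _); [lia|lia|].
    repeat split; [exact A1|exact B1|exact B2|exact A2].
  - destruct (Hc 3%nat 2%nat) as (_ & _ & _ & C); [lia|lia|].
    apply cont2_eps. intros e He. destruct (C e He) as (d' & Hd' & C').
    exists d'. split; auto. intros a b Ha Hb. apply C'; rewrite ?Rminus_diag, ?Rabs_R0; auto.
  - destruct (Hc 2%nat 3%nat) as (_ & _ & _ & C); [lia|lia|].
    apply cont2_eps. intros e He. destruct (C e He) as (d' & Hd' & C').
    exists d'. split; auto. intros a b Ha Hb. apply C'; rewrite ?Rminus_diag, ?Rabs_R0; auto.
Qed.


Lemma Derive_shift (g : R -> R) c x : Derive (fun t => g (t + c)) x = Derive g (x + c).
Proof.
  unfold Derive. f_equal. apply Lim_ext. intros h. replace (x + h + c) with (x + c + h) by ring. reflexivity.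
Qed.

Lemma deriv_eq3 (F G1 G2 G3 : R -> R) x c :
  (forall t, c * F t = G1 t + G2 t + G3 t) ->
  ex_derive G1 x -> ex_derive G2 x -> ex_derive G3 x ->
  c * Derive F x = Derive G1 x + Derive G2 x + Derive G3 x.
Proof.
  intros H H1 H2 H3. rewrite <- Derive_scal. rewrite (Derive_ext _ _ _ H).
  rewrite Derive_plus; auto.
  - rewrite Derive_plus; auto.
  - apply (ex_derive_plus G1 G2); auto.
Qed.

Lemma deriv_eq3_loc (F G1 G2 G3 : R -> R) x c :
  (exists d, 0 < d /\ forall t, Rabs (t - x) < d -> c * F t = G1 t + G2 t + G3 t) ->
  ex_derive G1 x -> ex_derive G2 x -> ex_derive G3 x ->
  c * Derive F x = Derive G1 x + Derive G2 x + Derive G3 x.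
Proof.
  intros (d & Hd & H) H1 H2 H3. rewrite <- Derive_scal.
  rewrite (Derive_ext_loc _ (fun t => G1 t + G2 t + G3 t)).
  - rewrite Derive_plus; auto.
    + rewrite Derive_plus; auto.
    + apply (ex_derive_plus G1 G2); auto.
  - exists (mkposreal d Hd). intros t Ht. apply H. exact Ht.
Qed.

Section Main.
Variables (T Lx Ly : R) (Rf P Q : fun4).
Hypothesis hT : 0 < T.
Hypothesis hLx : 0 < Lx.
Hypothesis hLy : 0 < Ly.
Hypothesis hperR : periodic_xy T Lx Ly Rf.
Hypothesis hperP : periodic_xy T Lx Ly P.
Hypothesis hperQ : periodic_xy T Lx Ly Q.
Hypothesis heq1 : forall u x y z, in_wedge T u z ->
     2 * pdu Rf u x y z = pdx P u x y z + pdy Q u x y z + pdz Rf u x y z.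
Hypothesis heq2 : forall u x y z, in_wedge T u z -> pdz P u x y z = pdx Rf u x y z.
Hypothesis heq3 : forall u x y z, in_wedge T u z -> pdz Q u x y z = pdy Rf u x y z.

Definition Good u x y z := C2prop Rf u x y z /\ C2prop P u x y z /\ C2prop Q u x y z.

Variable eta : R.
Hypothesis heta : 0 < eta.
Hypothesis Heta : forall u x y z, in_wedge T u z -> 0 <= x <= Lx -> 0 <= y <= Ly ->
  forall u' x' y' z', box4 eta u x y z u' x' y' z' -> Good u' x' y' z'.

Lemma good_box f u x y z : (f = Rf \/ f = P \/ f = Q) -> in_wedge T u z -> 0 <= x <= Lx -> 0 <= y <= Ly ->
  exists d, 0 < d /\ forall u' x' y' z', box4 d u x y z u' x' y' z' -> C2prop f u' x' y' z'.
Proof.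
  intros Hf Hw Hx Hy. exists eta. split; auto. intros u' x' y' z' Hb.
  destruct (Heta u x y z Hw Hx Hy u' x' y' z' Hb) as (A & B & C).
  destruct Hf as [ -> | [ -> | -> ] ]; auto.
Qed.

Lemma interior_wedge u z : 0 < u -> 0 < z -> u + z < T ->
  exists d, 0 < d /\ forall t, Rabs (t - z) < d -> in_wedge T u t.
Proof.
  intros Hu Hz Huz. exists (Rmin z (T - u - z)). split; [apply Rmin_pos; lra|].
  intros t Ht. pose proof (Rmin_l z (T - u - z)). pose proof (Rmin_r z (T - u - z)).
  apply Rabs_lt_between' in Ht. unfold in_wedge; lra.
Qed.

Lemma per_x f i u y z : periodic_xy T Lx Ly f -> 0 < u -> 0 < z -> u + z < T -> (1 <= i <= 3)%nat ->
  pd i f u Lx y z = pd i f u 0 y z.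
Proof.
  intros Hp Hu Hz Huz Hi.
  assert (Hw : in_wedge T u z) by (unfold in_wedge; lra).
  destruct i as [|[|[|[|i]]]]; try lia; simpl.
  - rewrite <- (Rplus_0_l Lx) at 1. rewrite <- Derive_shift.
    apply Derive_ext. intros t. apply (proj1 (Hp u t y z Hw)).
  - apply Derive_ext. intros t. rewrite <- (proj1 (Hp u 0 t z Hw)). rewrite Rplus_0_l. auto.
  - apply Derive_ext_loc. destruct (interior_wedge u z Hu Hz Huz) as (d & Hd & H).
    exists (mkposreal d Hd). intros t Ht. rewrite <- (proj1 (Hp u 0 y t (H t Ht))).
    rewrite Rplus_0_l. auto.
Qed.

Lemma per_y f i u x z : periodic_xy T Lx Ly f -> 0 < u -> 0 < z -> u + z < T -> (1 <= i <= 3)%nat ->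
  pd i f u x Ly z = pd i f u x 0 z.
Proof.
  intros Hp Hu Hz Huz Hi.
  assert (Hw : in_wedge T u z) by (unfold in_wedge; lra).
  destruct i as [|[|[|[|i]]]]; try lia; simpl.
  - apply Derive_ext. intros t. rewrite <- (proj2 (Hp u t 0 z Hw)). rewrite Rplus_0_l. auto.
  - rewrite <- (Rplus_0_l Ly) at 1. rewrite <- Derive_shift.
    apply Derive_ext. intros t. apply (proj2 (Hp u x t z Hw)).
  - apply Derive_ext_loc. destruct (interior_wedge u z Hu Hz Huz) as (d & Hd & H).
    exists (mkposreal d Hd). intros t Ht. rewrite <- (proj2 (Hp u x 0 t (H t Ht))).
    rewrite Rplus_0_l. auto.
Qed.

Lemma C2ex f i j u x y z : C2prop f u x y z -> (i < 4)%nat -> (j < 4)%nat -> ex_pd j (pd i f) u x y z.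
Proof. intros [_ H] Hi Hj. apply (H i j Hi Hj). Qed.

Lemma E1x u x y z : in_wedge T u z -> Good u x y z ->
  2 * pd 1 (pd 0 Rf) u x y z = pd 1 (pd 1 P) u x y z + pd 1 (pd 2 Q) u x y z + pd 1 (pd 3 Rf) u x y z.
Proof.
  intros Hw (HR & HP & HQ).
  change (2 * Derive (fun t => pd 0 Rf u t y z) x = Derive (fun t => pd 1 P u t y z) x +
    Derive (fun t => pd 2 Q u t y z) x + Derive (fun t => pd 3 Rf u t y z) x).
  apply deriv_eq3.
  - intros t. apply heq1; auto.
  - apply (C2ex P 1 1 u x y z); auto.
  - apply (C2ex Q 2 1 u x y z); auto.
  - apply (C2ex Rf 3 1 u x y z); auto.
Qed.

Lemma E1y u x y z : in_wedge T u z -> Good u x y z ->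
  2 * pd 2 (pd 0 Rf) u x y z = pd 2 (pd 1 P) u x y z + pd 2 (pd 2 Q) u x y z + pd 2 (pd 3 Rf) u x y z.
Proof.
  intros Hw (HR & HP & HQ).
  change (2 * Derive (fun t => pd 0 Rf u x t z) y = Derive (fun t => pd 1 P u x t z) y +
    Derive (fun t => pd 2 Q u x t z) y + Derive (fun t => pd 3 Rf u x t z) y).
  apply deriv_eq3.
  - intros t. apply heq1; auto.
  - apply (C2ex P 1 2 u x y z); auto.
  - apply (C2ex Q 2 2 u x y z); auto.
  - apply (C2ex Rf 3 2 u x y z); auto.
Qed.

Lemma E1z u x y z : 0 < u -> 0 < z -> u + z < T -> Good u x y z ->
  2 * pd 3 (pd 0 Rf) u x y z = pd 3 (pd 1 P) u x y z + pd 3 (pd 2 Q) u x y z + pd 3 (pd 3 Rf) u x y z.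
Proof.
  intros Hu Hz Huz (HR & HP & HQ).
  change (2 * Derive (fun t => pd 0 Rf u x y t) z = Derive (fun t => pd 1 P u x y t) z +
    Derive (fun t => pd 2 Q u x y t) z + Derive (fun t => pd 3 Rf u x y t) z).
  apply deriv_eq3_loc.
  - destruct (interior_wedge u z Hu Hz Huz) as (d & Hd & H). exists d; split; [exact Hd|].
    intros t Ht. apply heq1; auto.
  - apply (C2ex P 1 3 u x y z); auto.
  - apply (C2ex Q 2 3 u x y z); auto.
  - apply (C2ex Rf 3 3 u x y z); auto.
Qed.

Lemma E2x u x y z : in_wedge T u z -> pd 1 (pd 3 P) u x y z = pd 1 (pd 1 Rf) u x y z.
Proof. intros Hw. apply Derive_ext. intros t. apply heq2; auto. Qed.
Lemma E2y u x y z : in_wedge T u z -> pd 2 (pd 3 P) u x y z = pd 2 (pd 1 Rf) u x y z.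
Proof. intros Hw. apply Derive_ext. intros t. apply heq2; auto. Qed.
Lemma E3x u x y z : in_wedge T u z -> pd 1 (pd 3 Q) u x y z = pd 1 (pd 2 Rf) u x y z.
Proof. intros Hw. apply Derive_ext. intros t. apply heq3; auto. Qed.
Lemma E3y u x y z : in_wedge T u z -> pd 2 (pd 3 Q) u x y z = pd 2 (pd 2 Rf) u x y z.
Proof. intros Hw. apply Derive_ext. intros t. apply heq3; auto. Qed.

Definition A4 : fun4 := fun u x y z =>
  2 * (pd 1 Rf u x y z ^ 2 + pd 2 Rf u x y z ^ 2 + pd 3 Rf u x y z ^ 2).
Definition B4 : fun4 := fun u x y z =>
  pd 1 P u x y z ^ 2 + pd 1 Q u x y z ^ 2 + pd 2 P u x y z ^ 2 + pd 2 Q u x y z ^ 2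
  - pd 3 Rf u x y z ^ 2.
Definition dAu : fun4 := fun u x y z =>
  4 * (pd 1 Rf u x y z * pd 0 (pd 1 Rf) u x y z + pd 2 Rf u x y z * pd 0 (pd 2 Rf) u x y z
       + pd 3 Rf u x y z * pd 0 (pd 3 Rf) u x y z).
Definition dBg (i : nat) : fun4 := fun u x y z =>
  2 * (pd 1 P u x y z * pd i (pd 1 P) u x y z + pd 1 Q u x y z * pd i (pd 1 Q) u x y z
     + pd 2 P u x y z * pd i (pd 2 P) u x y z + pd 2 Q u x y z * pd i (pd 2 Q) u x y z
     - pd 3 Rf u x y z * pd i (pd 3 Rf) u x y z).
Definition C4 : fun4 := fun u x y z =>
  pd 1 Rf u x y z * pd 1 P u x y z + pd 2 Rf u x y z * pd 2 P u x y z + pd 3 Rf u x y z * pd 1 Rf u x y z.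
Definition dCx : fun4 := fun u x y z =>
  pd 1 (pd 1 Rf) u x y z * pd 1 P u x y z + pd 1 Rf u x y z * pd 1 (pd 1 P) u x y z
  + (pd 1 (pd 2 Rf) u x y z * pd 2 P u x y z + pd 2 Rf u x y z * pd 1 (pd 2 P) u x y z)
  + (pd 1 (pd 3 Rf) u x y z * pd 1 Rf u x y z + pd 3 Rf u x y z * pd 1 (pd 1 Rf) u x y z).
Definition D4 : fun4 := fun u x y z =>
  pd 1 Rf u x y z * pd 1 Q u x y z + pd 2 Rf u x y z * pd 2 Q u x y z + pd 3 Rf u x y z * pd 2 Rf u x y z.
Definition dDy : fun4 := fun u x y z =>
  pd 2 (pd 1 Rf) u x y z * pd 1 Q u x y z + pd 1 Rf u x y z * pd 2 (pd 1 Q) u x y z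
  + (pd 2 (pd 2 Rf) u x y z * pd 2 Q u x y z + pd 2 Rf u x y z * pd 2 (pd 2 Q) u x y z)
  + (pd 2 (pd 3 Rf) u x y z * pd 2 Rf u x y z + pd 3 Rf u x y z * pd 2 (pd 2 Rf) u x y z).

Lemma pointwise_identity u x y z : 0 < u -> 0 < z -> u + z < T -> 0 <= x <= Lx -> 0 <= y <= Ly ->
  dAu u x y z + dBg 3 u x y z = 2 * dCx u x y z + 2 * dDy u x y z.
Proof.
  intros Hu Hz Huz Hx Hy.
  assert (Hw : in_wedge T u z) by (unfold in_wedge; lra).
  assert (HG : Good u x y z) by (apply (Heta u x y z Hw Hx Hy); apply box4_refl; auto).
  assert (BR := good_box Rf u x y z ltac:(auto) Hw Hx Hy).
  assert (BP := good_box P u x y z ltac:(auto) Hw Hx Hy).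
  assert (BQ := good_box Q u x y z ltac:(auto) Hw Hx Hy).
  unfold dAu, dBg, dCx, dDy.
  rewrite (schwarz_01 Rf u x y z BR), (schwarz_02 Rf u x y z BR), (schwarz_03 Rf u x y z BR).
  assert (e1 := E1x u x y z Hw HG). assert (e2 := E1y u x y z Hw HG).
  assert (e3 := E1z u x y z Hu Hz Huz HG).
  replace (pd 1 (pd 0 Rf) u x y z) with
    ((pd 1 (pd 1 P) u x y z + pd 1 (pd 2 Q) u x y z + pd 1 (pd 3 Rf) u x y z) / 2) by lra.
  replace (pd 2 (pd 0 Rf) u x y z) with
    ((pd 2 (pd 1 P) u x y z + pd 2 (pd 2 Q) u x y z + pd 2 (pd 3 Rf) u x y z) / 2) by lra.
  replace (pd 3 (pd 0 Rf) u x y z) with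
    ((pd 3 (pd 1 P) u x y z + pd 3 (pd 2 Q) u x y z + pd 3 (pd 3 Rf) u x y z) / 2) by lra.
  rewrite (schwarz_12 P u x y z BP).
  rewrite <- (schwarz_12 Q u x y z BQ).
  rewrite <- (schwarz_13 P u x y z BP), (E2x u x y z Hw).
  rewrite <- (schwarz_23 Q u x y z BQ), (E3y u x y z Hw).
  rewrite <- (schwarz_13 Q u x y z BQ), (E3x u x y z Hw).
  rewrite <- (schwarz_23 P u x y z BP), (E2y u x y z Hw).
  rewrite (schwarz_12 Rf u x y z BR).
  field.
Qed.

Lemma cont4_minus (f g : fun4) u x y z : cont4_at f u x y z -> cont4_at g u x y z ->
  cont4_at (fun a b c d => f a b c d - g a b c d) u x y z.
Proof. intros; apply (cont4_plus f (fun a b c d => - g a b c d)); auto. apply cont4_opp; auto. Qed.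

Lemma cont4_pow2 (f : fun4) u x y z : cont4_at f u x y z ->
  cont4_at (fun a b c d => f a b c d ^ 2) u x y z.
Proof.
  intros H. assert (Hm := cont4_mult f f u x y z H H).
  intros e He. destruct (Hm e He) as (d & Hd & H'). exists d; split; auto.
  intros. simpl. rewrite !Rmult_1_r. apply H'; auto.
Qed.

Lemma is_derive_eq (f : R -> R) (x l l' : R) : is_derive f x l -> l = l' -> is_derive f x l'.
Proof. intros H ->; auto. Qed.

Lemma is_derive_minusR (f g : R -> R) (x a b : R) :
  is_derive f x a -> is_derive g x b -> is_derive (fun t => f t - g t) x (a - b).
Proof. intros; apply (is_derive_minus f g); auto. Qed.

Lemma is_derive_pow2 (f : R -> R) (x a : R) : is_derive f x a -> is_derive (fun t => f t ^ 2) x (2 * f x * a).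
Proof.
  intros H. assert (H2 := is_derive_multR f f x a a H H).
  apply (is_derive_ext' (fun t => f t * f t) (fun t => f t ^ 2) x (a * f x + f x * a));
    [intros; ring | ring | exact H2].
Qed.

Definition fam f := f = Rf \/ f = P \/ f = Q.

Lemma cpd0 f u x y z : fam f -> Good u x y z -> cont4_at f u x y z.
Proof. intros [ -> | [ -> | -> ] ] (A & B & C); [apply A|apply B|apply C]. Qed.

Lemma good_C2 f u x y z : fam f -> Good u x y z -> C2prop f u x y z.
Proof. intros [ -> | [ -> | -> ] ] (A & B & C); auto. Qed.

Lemma cpd1 f i u x y z : fam f -> (i < 4)%nat -> Good u x y z -> cont4_at (pd i f) u x y z.
Proof. intros Hf Hi HG. destruct (good_C2 f u x y z Hf HG) as [_ H]. apply (H i i Hi Hi). Qed.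

Lemma cpd2 f i j u x y z : fam f -> (i < 4)%nat -> (j < 4)%nat -> Good u x y z ->
  cont4_at (pd j (pd i f)) u x y z.
Proof. intros Hf Hi Hj HG. destruct (good_C2 f u x y z Hf HG) as [_ H]. apply (H i j Hi Hj). Qed.

Lemma dpd f i j u x y z : fam f -> (i < 4)%nat -> (j < 4)%nat -> Good u x y z ->
  ex_pd j (pd i f) u x y z.
Proof. intros Hf Hi Hj HG. destruct (good_C2 f u x y z Hf HG) as [_ H]. apply (H i j Hi Hj). Qed.

Lemma fR : fam Rf. Proof. left; auto. Qed.
Lemma fP : fam P. Proof. right; left; auto. Qed.
Lemma fQ : fam Q. Proof. right; right; auto. Qed.

Ltac famp f := lazymatch f with Rf => exact fR | P => exact fP | Q => exact fQ end.

Ltac c4 HG := repeat match goal with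
  | |- cont4_at (fun a b c d => _ - _) _ _ _ _ => apply cont4_minus
  | |- cont4_at (fun a b c d => _ + _) _ _ _ _ => apply cont4_plus
  | |- cont4_at (fun a b c d => _ * _) _ _ _ _ => apply cont4_mult
  | |- cont4_at (fun a b c d => _ ^ 2) _ _ _ _ => apply cont4_pow2
  | |- cont4_at (fun a b c d => - _) _ _ _ _ => apply cont4_opp
  | |- cont4_at (fun a b c d => pd ?j (pd ?i ?f) a b c d) _ _ _ _ =>
      apply (cpd2 f i j); [famp f|lia|lia|exact HG]
  | |- cont4_at (fun a b c d => pd ?i ?f a b c d) _ _ _ _ =>
      apply (cpd1 f i); [famp f|lia|exact HG]
  | |- cont4_at (pd ?j (pd ?i ?f)) _ _ _ _ => apply (cpd2 f i j); [famp f|lia|lia|exact HG]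
  | |- cont4_at (pd ?i ?f) _ _ _ _ => apply (cpd1 f i); [famp f|lia|exact HG]
  | |- cont4_at (fun a b c d => _) _ _ _ _ => apply cont4_const
  end.

Lemma cont_A4 u x y z : Good u x y z -> cont4_at A4 u x y z.
Proof. intros HG. unfold A4. c4 HG. Qed.
Lemma cont_B4 u x y z : Good u x y z -> cont4_at B4 u x y z.
Proof. intros HG. unfold B4. c4 HG. Qed.
Lemma cont_dAu u x y z : Good u x y z -> cont4_at dAu u x y z.
Proof. intros HG. unfold dAu. c4 HG. Qed.
Lemma cont_dBg i u x y z : (i < 4)%nat -> Good u x y z -> cont4_at (dBg i) u x y z.
Proof. intros Hi HG. unfold dBg. c4 HG. Qed.
Lemma cont_C4 u x y z : Good u x y z -> cont4_at C4 u x y z.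
Proof. intros HG. unfold C4. c4 HG. Qed.
Lemma cont_D4 u x y z : Good u x y z -> cont4_at D4 u x y z.
Proof. intros HG. unfold D4. c4 HG. Qed.
Lemma cont_dCx u x y z : Good u x y z -> cont4_at dCx u x y z.
Proof. intros HG. unfold dCx. c4 HG. Qed.
Lemma cont_dDy u x y z : Good u x y z -> cont4_at dDy u x y z.
Proof. intros HG. unfold dDy. c4 HG. Qed.

Lemma dleaf0 f i u x y z : fam f -> (i < 4)%nat -> Good u x y z ->
  is_derive (fun t => pd i f t x y z) u (pd 0 (pd i f) u x y z).
Proof. intros Hf Hi HG. apply Derive_correct. apply (dpd f i 0 u x y z Hf Hi ltac:(lia) HG). Qed.
Lemma dleaf1 f i u x y z : fam f -> (i < 4)%nat -> Good u x y z ->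
  is_derive (fun t => pd i f u t y z) x (pd 1 (pd i f) u x y z).
Proof. intros Hf Hi HG. apply Derive_correct. apply (dpd f i 1 u x y z Hf Hi ltac:(lia) HG). Qed.
Lemma dleaf2 f i u x y z : fam f -> (i < 4)%nat -> Good u x y z ->
  is_derive (fun t => pd i f u x t z) y (pd 2 (pd i f) u x y z).
Proof. intros Hf Hi HG. apply Derive_correct. apply (dpd f i 2 u x y z Hf Hi ltac:(lia) HG). Qed.
Lemma dleaf3 f i u x y z : fam f -> (i < 4)%nat -> Good u x y z ->
  is_derive (fun t => pd i f u x y t) z (pd 3 (pd i f) u x y z).
Proof. intros Hf Hi HG. apply Derive_correct. apply (dpd f i 3 u x y z Hf Hi ltac:(lia) HG). Qed.

Ltac gen_pd := repeat match goal with |- context [pd ?i ?f ?u ?x ?y ?z] =>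
  let v := fresh "v" in generalize (pd i f u x y z) as v; intros v end.

Ltac dtac HG := repeat match goal with
  | |- is_derive (fun t => @?f t - @?g t) _ _ => apply (is_derive_minusR f g)
  | |- is_derive (fun t => @?f t + @?g t) _ _ => apply (is_derive_plusR f g)
  | |- is_derive (fun t => @?f t ^ 2) _ _ => apply (is_derive_pow2 f)
  | |- is_derive (fun t => 2 * @?f t) _ _ => apply (is_derive_scal f)
  | |- is_derive (fun t => 4 * @?f t) _ _ => apply (is_derive_scal f)
  | |- is_derive (fun t => @?f t * @?g t) _ _ => apply (is_derive_multR f g)
  | |- is_derive (fun t => pd ?i ?f t ?x ?y ?z) ?u _ =>
      apply (dleaf0 f i u x y z); [famp f|lia|exact HG]
  | |- is_derive (fun t => pd ?i ?f ?u t ?y ?z) ?x _ =>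
      apply (dleaf1 f i u x y z); [famp f|lia|exact HG]
  | |- is_derive (fun t => pd ?i ?f ?u ?x t ?z) ?y _ =>
      apply (dleaf2 f i u x y z); [famp f|lia|exact HG]
  | |- is_derive (fun t => pd ?i ?f ?u ?x ?y t) ?z _ =>
      apply (dleaf3 f i u x y z); [famp f|lia|exact HG]
  end.

Lemma D_A4 u x y z : Good u x y z -> is_derive (fun t => A4 t x y z) u (dAu u x y z).
Proof. intros HG. unfold A4, dAu. eapply is_derive_eq; [dtac HG|]. gen_pd; ring. Qed.
Lemma D_B4u u x y z : Good u x y z -> is_derive (fun t => B4 t x y z) u (dBg 0 u x y z).
Proof. intros HG. unfold B4, dBg. eapply is_derive_eq; [dtac HG|]. gen_pd; ring. Qed.
Lemma D_B4z u x y z : Good u x y z -> is_derive (fun t => B4 u x y t) z (dBg 3 u x y z).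
Proof. intros HG. unfold B4, dBg. eapply is_derive_eq; [dtac HG|]. gen_pd; ring. Qed.
Lemma D_C4 u x y z : Good u x y z -> is_derive (fun t => C4 u t y z) x (dCx u x y z).
Proof. intros HG. unfold C4, dCx. eapply is_derive_eq; [dtac HG|]. gen_pd; ring. Qed.
Lemma D_D4 u x y z : Good u x y z -> is_derive (fun t => D4 u x t z) y (dDy u x y z).
Proof. intros HG. unfold D4, dDy. eapply is_derive_eq; [dtac HG|]. gen_pd; ring. Qed.

Definition S2 u z := exists u' z', in_wedge T u' z' /\ Rabs (u - u') < eta/2 /\ Rabs (z - z') < eta/2.

Lemma clamp a b r x : a <= b -> 0 < r -> a - r < x < b + r -> exists c, a <= c <= b /\ Rabs (x - c) < r.
Proof.
  intros Hab Hr Hx. destruct (Rlt_le_dec x a); [|destruct (Rlt_le_dec b x)].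
  - exists a. split; [lra|]. apply Rabs_lt_between'; lra.
  - exists b. split; [lra|]. apply Rabs_lt_between'; lra.
  - exists x. split; [lra|]. rewrite Rminus_diag, Rabs_R0; lra.
Qed.

Lemma S2_slab u z : S2 u z -> slab Good Lx Ly u z (eta/2).
Proof.
  intros (u' & z' & Hw & Hu & Hz) u1 x y z1 H1 H2 Hx Hy.
  destruct (clamp 0 Lx (eta/2) x) as (cx & Hcx & Hcx'); try lra.
  destruct (clamp 0 Ly (eta/2) y) as (cy & Hcy & Hcy'); try lra.
  apply (Heta u' cx cy z' Hw Hcx Hcy).
  apply Rabs_lt_between' in Hu, Hz, H1, H2, Hcx', Hcy'.
  unfold box4; repeat split; apply Rabs_lt_between'; lra.
Qed.

Lemma S2_near u' z' : in_wedge T u' z' -> forall u z,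
  Rabs (u - u') < eta/2 -> Rabs (z - z') < eta/2 -> S2 u z.
Proof. intros Hw u z Hu Hz. exists u', z'. auto. Qed.

Lemma S2_w u z : in_wedge T u z -> S2 u z.
Proof. intros Hw. apply (S2_near u z Hw); rewrite Rminus_diag, Rabs_R0; lra. Qed.

Lemma I2c (k : fun4) u z : (forall u x y z, Good u x y z -> cont4_at k u x y z) ->
  S2 u z -> continuity_2d_pt (I2 Lx Ly k) u z.
Proof. intros Hk HS. apply (I2_cont2 Good Lx Ly hLx hLy k u z (eta/2)); auto; [lra|apply S2_slab; auto]. Qed.

Lemma I2_ext (k1 k2 : fun4) u z :
  (forall x y, 0 < x < Lx -> 0 < y < Ly -> k1 u x y z = k2 u x y z) -> I2 Lx Ly k1 u z = I2 Lx Ly k2 u z.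
Proof.
  intros H. unfold I2, int_xy. apply RInt_ext. intros x Hx. rewrite Rmin_left, Rmax_right in Hx; try lra.
  apply RInt_ext. intros y Hy. rewrite Rmin_left, Rmax_right in Hy; try lra. apply H; auto.
Qed.

Lemma interior_zero u z : 0 < u -> 0 < z -> u + z < T ->
  I2 Lx Ly dAu u z + I2 Lx Ly (dBg 3) u z = 0.
Proof.
  intros Hu Hz Huz.
  assert (Hs : slab Good Lx Ly u z (eta/2)) by (apply S2_slab, S2_w; unfold in_wedge; lra).
  assert (Hr : 0 < eta/2) by lra.
  rewrite <- (I2_plus Good Lx Ly hLx hLy dAu (dBg 3) u z (eta/2) cont_dAu
                (fun u x y z => cont_dBg 3 u x y z (le_n 4)) Hr Hs).
  rewrite (I2_ext _ (fun a b c d => (fun a b c d => 2 * dCx a b c d) a b c d +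
                                    (fun a b c d => 2 * dDy a b c d) a b c d)).
  2:{ intros x y Hx Hy. apply pointwise_identity; lra. }
  rewrite (I2_plus Good Lx Ly hLx hLy (fun a b c d => 2 * dCx a b c d)
             (fun a b c d => 2 * dDy a b c d) u z (eta/2)); auto.
  2:{ intros; apply (cont4_mult (fun _ _ _ _ => 2)); [apply cont4_const|apply cont_dCx; auto]. }
  2:{ intros; apply (cont4_mult (fun _ _ _ _ => 2)); [apply cont4_const|apply cont_dDy; auto]. }
  rewrite (I2_scal Good Lx Ly hLx hLy 2 dCx u z (eta/2) cont_dCx Hr Hs).
  rewrite (I2_scal Good Lx Ly hLx hLy 2 dDy u z (eta/2) cont_dDy Hr Hs).
  rewrite (I2_dx_zero Good Lx Ly hLx hLy C4 dCx cont_C4 cont_dCx u z (eta/2) Hr Hs D_C4).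
  2:{ intros y. unfold C4.
      rewrite (per_x Rf 1 u y z hperR Hu Hz Huz ltac:(lia)), (per_x Rf 2 u y z hperR Hu Hz Huz ltac:(lia)),
        (per_x Rf 3 u y z hperR Hu Hz Huz ltac:(lia)), (per_x P 1 u y z hperP Hu Hz Huz ltac:(lia)),
        (per_x P 2 u y z hperP Hu Hz Huz ltac:(lia)). reflexivity. }
  rewrite (I2_dy_zero Good Lx Ly hLx hLy D4 dDy cont_dDy u z (eta/2) Hr Hs D_D4).
  2:{ intros x. unfold D4.
      rewrite (per_y Rf 1 u x z hperR Hu Hz Huz ltac:(lia)), (per_y Rf 2 u x z hperR Hu Hz Huz ltac:(lia)),
        (per_y Rf 3 u x z hperR Hu Hz Huz ltac:(lia)), (per_y Q 1 u x z hperQ Hu Hz Huz ltac:(lia)),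
        (per_y Q 2 u x z hperQ Hu Hz Huz ltac:(lia)). reflexivity. }
  ring.
Qed.

Definition FT : fun4 := fun u x y z =>
      pdx Rf u x y z ^ 2 + pdy Rf u x y z ^ 2 + pdz Rf u x y z ^ 2
    + pdx P u x y z ^ 2 + pdx Q u x y z ^ 2 + pdy P u x y z ^ 2 + pdy Q u x y z ^ 2.
Definition Fu : fun4 := fun u x y z =>
            pdx Rf u x y z ^ 2 + pdy Rf u x y z ^ 2 + pdz Rf u x y z ^ 2.
Definition Fz : fun4 := fun u x y z =>
            pdx P u x y z ^ 2 + pdx Q u x y z ^ 2 + pdy P u x y z ^ 2 + pdy Q u x y z ^ 2.

Lemma cont_FT u x y z : Good u x y z -> cont4_at FT u x y z.
Proof. intros HG. unfold FT, pdx, pdy, pdz. c4 HG. Qed.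
Lemma cont_Fu u x y z : Good u x y z -> cont4_at Fu u x y z.
Proof. intros HG. unfold Fu, pdx, pdy, pdz. c4 HG. Qed.
Lemma cont_Fz u x y z : Good u x y z -> cont4_at Fz u x y z.
Proof. intros HG. unfold Fz, pdx, pdy, pdz. c4 HG. Qed.
Lemma cont_AB u x y z : Good u x y z -> cont4_at (fun a b c d => A4 a b c d + B4 a b c d) u x y z.
Proof. intros HG. apply cont4_plus; [apply cont_A4|apply cont_B4]; auto. Qed.
Lemma cont_0 u x y z : Good u x y z -> cont4_at (fun _ _ _ _ => 0) u x y z.
Proof. intros; apply cont4_const. Qed.

Lemma I2_zero u z : I2 Lx Ly (fun _ _ _ _ => 0) u z = 0.
Proof.
  unfold I2, int_xy. rewrite (RInt_ext _ (fun _ => 0)).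
  - rewrite RInt_const. unfold scal; simpl; unfold mult; simpl; ring.
  - intros x _. rewrite RInt_const. unfold scal; simpl; unfold mult; simpl; ring.
Qed.

Lemma ex_line (k : fun4) : (forall u x y z, Good u x y z -> cont4_at k u x y z) ->
  ex_RInt (fun z => I2 Lx Ly k (T - z) z) 0 T.
Proof.
  intros Hk. apply ex_RInt_contR. intros t Ht. rewrite Rmin_left, Rmax_right in Ht; try lra.
  apply (cont2_line (fun u v => I2 Lx Ly k u v)). apply I2c; auto. apply S2_w. unfold in_wedge; lra.
Qed.

Lemma ex_snd (k : fun4) : (forall u x y z, Good u x y z -> cont4_at k u x y z) ->
  ex_RInt (fun z => I2 Lx Ly k 0 z) 0 T.
Proof.
  intros Hk. apply ex_RInt_contR. intros t Ht. rewrite Rmin_left, Rmax_right in Ht; try lra.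
  apply (cont2_snd (I2 Lx Ly k)). apply I2c; auto. apply S2_w. unfold in_wedge; lra.
Qed.

Lemma ex_fst (k : fun4) : (forall u x y z, Good u x y z -> cont4_at k u x y z) ->
  ex_RInt (fun u => I2 Lx Ly k u 0) 0 T.
Proof.
  intros Hk. apply ex_RInt_contR. intros t Ht. rewrite Rmin_left, Rmax_right in Ht; try lra.
  apply (cont2_fst (I2 Lx Ly k)). apply I2c; auto. apply S2_w. unfold in_wedge; lra.
Qed.

Lemma main_ineq :
  int_Sigma_T T Lx Ly FT <= 2 * (int_Sigma_u T Lx Ly Fu + int_Sigma_z T Lx Ly Fz).
Proof.
  assert (Hr : 0 < eta/2) by lra.
  assert (TI := triangle_identity T (eta/2) S2 (I2 Lx Ly A4) (I2 Lx Ly B4) (I2 Lx Ly dAu)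
     (I2 Lx Ly (dBg 0)) (I2 Lx Ly (dBg 3)) hT Hr S2_near
     (fun u z H => I2c A4 u z cont_A4 H) (fun u z H => I2c B4 u z cont_B4 H)
     (fun u z H => I2c dAu u z cont_dAu H)
     (fun u z H => I2c (dBg 0) u z (fun u x y z => cont_dBg 0 u x y z ltac:(lia)) H)
     (fun u z H => I2c (dBg 3) u z (fun u x y z => cont_dBg 3 u x y z ltac:(lia)) H)
     (fun u z H => I2_deriv_u Good Lx Ly hLx hLy A4 dAu cont_A4 cont_dAu D_A4 u z (eta/2) Hr
                     (S2_slab u z H))
     (fun u z H => I2_deriv_u Good Lx Ly hLx hLy B4 (dBg 0) cont_B4
                     (fun u x y z => cont_dBg 0 u x y z ltac:(lia)) D_B4u u z (eta/2) Hr
                     (S2_slab u z H))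
     (fun u z H => I2_deriv_z Good Lx Ly B4 (dBg 3) u z (eta/2) hLx hLy cont_B4
                     (fun u x y z => cont_dBg 3 u x y z ltac:(lia)) D_B4z Hr (S2_slab u z H))
     interior_zero).
  unfold int_Sigma_T, int_Sigma_u, int_Sigma_z.
  change (RInt (fun z => I2 Lx Ly FT (T - z) z) 0 T <=
          2 * (RInt (fun z => I2 Lx Ly Fu 0 z) 0 T + RInt (fun u => I2 Lx Ly Fz u 0) 0 T)).
  assert (H1 : RInt (fun z => I2 Lx Ly FT (T - z) z) 0 T <=
               RInt (fun z => I2 Lx Ly A4 (T - z) z + I2 Lx Ly B4 (T - z) z) 0 T).
  { apply RInt_le; try lra.
    - apply ex_line, cont_FT.
    - apply (ex_RInt_plus (V := R_CompleteNormedModule) (fun z => I2 Lx Ly A4 (T - z) z)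
               (fun z => I2 Lx Ly B4 (T - z) z)); apply ex_line; [apply cont_A4|apply cont_B4].
    - intros z Hz.
      assert (Hs : slab Good Lx Ly (T - z) z (eta/2)) by (apply S2_slab, S2_w; unfold in_wedge; lra).
      rewrite <- (I2_plus Good Lx Ly hLx hLy A4 B4 (T - z) z (eta/2) cont_A4 cont_B4 Hr Hs).
      apply (I2_le Good Lx Ly hLx hLy FT _ (T - z) z (eta/2) cont_FT cont_AB Hr Hs).
      intros x y _ _. unfold FT, A4, B4, pdx, pdy, pdz.
      pose proof (pow2_ge_0 (pd 1 Rf (T - z) x y z)). pose proof (pow2_ge_0 (pd 2 Rf (T - z) x y z)).
      lra. }
  rewrite TI in H1.
  assert (H2 : RInt (fun z => I2 Lx Ly A4 0 z) 0 T = 2 * RInt (fun z => I2 Lx Ly Fu 0 z) 0 T).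
  { rewrite (RInt_ext _ (fun z => 2 * I2 Lx Ly Fu 0 z)).
    - apply (RInt_scal (V := R_CompleteNormedModule) (fun z => I2 Lx Ly Fu 0 z)).
      apply ex_snd, cont_Fu.
    - intros z Hz. rewrite Rmin_left, Rmax_right in Hz; try lra.
      assert (Hs : slab Good Lx Ly 0 z (eta/2)) by (apply S2_slab, S2_w; unfold in_wedge; lra).
      apply (I2_scal Good Lx Ly hLx hLy 2 Fu 0 z (eta/2) cont_Fu Hr Hs). }
  assert (H3 : RInt (fun u => I2 Lx Ly B4 u 0) 0 T <= RInt (fun u => I2 Lx Ly Fz u 0) 0 T).
  { apply RInt_le; try lra.
    - apply ex_fst, cont_B4.
    - apply ex_fst, cont_Fz.
    - intros u Hu.
      assert (Hs : slab Good Lx Ly u 0 (eta/2)) by (apply S2_slab, S2_w; unfold in_wedge; lra).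
      apply (I2_le Good Lx Ly hLx hLy B4 Fz u 0 (eta/2) cont_B4 cont_Fz Hr Hs).
      intros x y _ _. unfold Fz, B4, pdx, pdy, pdz.
      pose proof (pow2_ge_0 (pd 3 Rf u x y 0)). lra. }
  assert (H4 : 0 <= RInt (fun u => I2 Lx Ly Fz u 0) 0 T).
  { assert (E0 : RInt (fun _ : R => 0) 0 T = 0).
    { rewrite RInt_const. unfold scal; simpl; unfold mult; simpl; ring. }
    apply Rle_trans with (RInt (fun _ : R => 0) 0 T); [right; symmetry; exact E0|]. apply RInt_le; try lra.
    - apply ex_RInt_const.
    - apply ex_fst, cont_Fz.
    - intros u Hu.
      assert (Hs : slab Good Lx Ly u 0 (eta/2)) by (apply S2_slab, S2_w; unfold in_wedge; lra).
      apply Rle_trans with (I2 Lx Ly (fun _ _ _ _ => 0) u 0); [right; symmetry; apply I2_zero|].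
      apply (I2_le Good Lx Ly hLx hLy _ Fz u 0 (eta/2) cont_0 cont_Fz Hr Hs).
      intros x y _ _. unfold Fz. pose proof (pow2_ge_0 (pdx P u x y 0)).
      pose proof (pow2_ge_0 (pdx Q u x y 0)). pose proof (pow2_ge_0 (pdy P u x y 0)).
      pose proof (pow2_ge_0 (pdy Q u x y 0)). lra. }
  lra.
Qed.
End Main.

Theorem mainTheorem2 (T Lx Ly : R) (Rf P Q : R -> R -> R -> R -> R)
  (hT : 0 < T) (hLx : 0 < Lx) (hLy : 0 < Ly)
  (hC2 : forall u x y z, in_wedge T u z ->
     C2_at Rf u x y z /\ C2_at P u x y z /\ C2_at Q u x y z)
  (hperR : periodic_xy T Lx Ly Rf)
  (hperP : periodic_xy T Lx Ly P)
  (hperQ : periodic_xy T Lx Ly Q)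
  (heq1 : forall u x y z, in_wedge T u z ->
     2 * pdu Rf u x y z = pdx P u x y z + pdy Q u x y z + pdz Rf u x y z)
  (heq2 : forall u x y z, in_wedge T u z -> pdz P u x y z = pdx Rf u x y z)
  (heq3 : forall u x y z, in_wedge T u z -> pdz Q u x y z = pdy Rf u x y z) :
  int_Sigma_T T Lx Ly (fun u x y z =>
      pdx Rf u x y z ^ 2 + pdy Rf u x y z ^ 2 + pdz Rf u x y z ^ 2
    + pdx P u x y z ^ 2 + pdx Q u x y z ^ 2 + pdy P u x y z ^ 2 + pdy Q u x y z ^ 2)
  <= 2 * (int_Sigma_u T Lx Ly (fun u x y z =>
            pdx Rf u x y z ^ 2 + pdy Rf u x y z ^ 2 + pdz Rf u x y z ^ 2)
        + int_Sigma_z T Lx Ly (fun u x y z =>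
            pdx P u x y z ^ 2 + pdx Q u x y z ^ 2 + pdy P u x y z ^ 2 + pdy Q u x y z ^ 2)).
Proof.
  destruct (thickness T Lx Ly (Good Rf P Q)) as (eta & Heta0 & Heta).
  - intros u x y z Hw. destruct (hC2 u x y z Hw) as ((d1 & Hd1 & H1) & (d2 & Hd2 & H2) & (d3 & Hd3 & H3)).
    exists (Rmin d1 (Rmin d2 d3)). split; [apply Rmin_pos; [|apply Rmin_pos]; auto|].
    intros u' x' y' z' (A & B & C & D).
    pose proof (Rmin_l d1 (Rmin d2 d3)). pose proof (Rmin_r d1 (Rmin d2 d3)).
    pose proof (Rmin_l d2 d3). pose proof (Rmin_r d2 d3).
    split; [|split].
    + apply H1; lra.
    + apply H2; lra.
    + apply H3; lra.
  - exact (main_ineq T Lx Ly Rf P Q hT hLx hLy hperR hperP hperQ heq1 heq2 heq3 eta Heta0 Heta).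
Qed.
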